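(* Let $\mathcal T=(\mathcal S,\to)$ be an LTS over $\Sigma$ and $\mathcal V$ a valuation, and let $S\subseteq\mathcal S$ and a well-formed formula $\Phi$ in positive normal form be such that $S\subseteq[\![\Phi]\!]_{\mathcal V}$. Then the sequent $S\vdash^{\mathcal T}_{\mathcal V,\varepsilon}\Phi$ (with empty definition list $\varepsilon$) has a successful tableau, i.e. there is a successful tableau whose root is labelled by this sequent.
   Context: Fix a set $\Sigma$ and a countably infinite set $\mathrm{Var}$ of propositional variables. An LTS is $\mathcal T=(\mathcal S,\to)$ with ${\to}\subseteq\mathcal S\times\Sigma\times\mathcal S$; for $K\subseteq\Sigma$ write $s\xrightarrow{K}s'$ if $s\xrightarrow{a}s'$ for some $a\in K$. A valuation is $\mathcal V:\mathrm{Var}\to 2^{\mathcal S}$. Formulas: $\Phi::=Z\mid\neg\Phi\mid\Phi_1\wedge\Phi_2\mid[K]\Phi\mid\nu Z.\Phi$, well-formed if in each subformula $\nu Z.\Phi$ every free occurrence of $Z$ in $\Phi$ is under an even number of negations. Derived: $\Phi_1\vee\Phi_2=\neg(\neg\Phi_1\wedge\neg\Phi_2)$, $\langle K\rangle\Phi=\neg[K]\neg\Phi$, $\mu Z.\Phi=\neg\nu Z.\neg\Phi[Z:=\neg Z]$. Semantics: $[\![Z]\!]_{\mathcal V}=\mathcal V(Z)$, negation is complement, $\wedge$ is intersection, $[\![[K]\Phi]\!]_{\mathcal V}=\{s\mid\forall s'.\ s\xrightarrow{K}s'\Rightarrow s'\in[\![\Phi]\!]_{\mathcal V}\}$, $[\![\nu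 Z.\Phi]\!]_{\mathcal V}=\bigcup\{S'\mid S'\subseteq[\![\Phi]\!]_{\mathcal V[Z:=S']}\}$. Positive normal form: built from $Z,\neg Z,\wedge,\vee,[K],\langle K\rangle,\nu,\mu$. Substitution is capture-free. Definition list: $\Delta=(U_1=\Phi_1)\cdots(U_n=\Phi_n)$, distinct $U_i\in\mathrm{Var}$, no $U_i$ bound in any $\Phi_j$, $U_j$ not free in $\Phi_i$ for $i\le j$; $\Delta(U_i)=\Phi_i$, $\mathrm{dom}(\Delta)=\{U_i\}$. $\mathcal V[\varepsilon]=\mathcal V$, $\mathcal V[(U=\Phi)\cdot\Delta]=(\mathcal V[U:=[\![\Phi]\!]_{\mathcal V}])[\Delta]$. A sequent $S\vdash^{\mathcal T}_{\mathcal V,\Delta}\Phi$: $S\subseteq\mathcal S$, $\Delta$ a definition list, $\Phi$ in positive normal form with every $U\in\mathrm{dom}(\Delta)$ positive and not bound in $\Phi$. Rules (conclusion; premises): ($\wedge$) $S\vdash_\Delta\Phi_1\wedge\Phi_2$; $S\vdash_\Delta\Phi_1$, $S\vdash_\Delta\Phi_2$. ($\vee$) $S\vdash_\Delta\Phi_1\vee\Phi_2$; $S_1\vdash_\Delta\Phi_1$, $S_2\vdash_\Delta\Phi_2$, $S=S_1\cup S_2$. ($[K]$) $S\vdash_\Delta[K]\Phi$; $\{s'\mid\exists s\in S.\ s\xrightarrow{K}s'\}\vdash_\Delta\Phi$. ($\langle K\rangle$ with witness $f:S\to\mathcal S$, $s\xrightarrow{K}f(s)$ for all $s\in S$) $S\vdash_\Delta\langle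 K\rangle\Phi$; $f(S)\vdash_\Delta\Phi$. ($\sigma Z$) $S\vdash_\Delta\sigma Z.\Phi$; $S\vdash_{\Delta\cdot(U=\sigma Z.\Phi)}U$, $U$ fresh. (Un) $S\vdash_\Delta U$; $S\vdash_\Delta\Phi[Z:=U]$ where $\Delta(U)=\sigma Z.\Phi$. (Thin) $S\vdash_\Delta\Phi$; $S'\vdash_\Delta\Phi$, $S\subseteq S'$. A partial tableau is a finite nonempty ordered tree of nodes labelled by sequents over $\mathcal T,\mathcal V$, each internal node labelled by a rule application (rule name, plus witness function for $\langle K\rangle$) such that it and its ordered children form an instance of the rule. Write $S_n$ for the state set of node $n$. It is a tableau if the root's definition list is empty and every leaf $n$ (sequent $S_n\vdash_\Delta\Phi$) is terminal: (a) $\Phi$ is $Z$ or $\neg Z$ with $Z\notin\mathrm{dom}(\Delta)$; or (b) $\Phi=\langle K\rangle\Psi$ and some $s\in S_n$ has no $K$-successor (diamond leaf); or (c) $\Phi=U\in\mathrm{dom}(\Delta)$ and some strict ancestor $m$ has formula $U$ and $S_n\subseteq S_m$ ($\sigma$-leaf; $\mu$-/$\nu$-leaf according to $\Delta(U)$). Companion nodes are the nodes with rule Un. Companion leaves of a companion node $m$: leaves that are strict descendants of $m$ with the same formula and $S_n\subseteq S_m$, excluding companion leaves of companion nodes strictly below $m$. For a child $n'$ of $n$: $s'<_{n',n}s$ iff $s'\in S_{n'}$, $s\in S_n$, and: rule $[K]$ with $s\xrightarrow{K}s'$; or rule $(\langle K\rangle,f)$ with $s'=f(s)$; or another rule with $s'=s$.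 $\lessdot_{n',n}$ is least with $s\lessdot_{n,n}s$ ($s\in S_n$) and: $s'\lessdot_{n',m}s''$, $s''<_{m,n}s$ imply $s'\lessdot_{n',n}s$. $<:_{n',n}$ and $<:_m$ ($m$ a companion node) are least with: $s'<:_m s$ iff some companion leaf $m'$ of $m$ has $s'\in S_{m'}$ and $s'<:_{m',m}s$; $s'<:_{n',n}s$ iff $s'\in S_{n'}$, $s\in S_n$, and either $s'\lessdot_{n',n}s$ or there are a companion node $m\notin\{n,n'\}$ and $t,t'\in S_m$ with $s'<:_{n',m}t'$, $t'(<:_m)^+t$, $t\lessdot_{m,n}s$. A leaf with sequent $S_n\vdash_\Delta\Phi$ is successful iff: $\Phi=Z\notin\mathrm{dom}(\Delta)$ and $S_n\subseteq\mathcal V(Z)$; or $\Phi=\neg Z$, $Z\notin\mathrm{dom}(\Delta)$, $S_n\cap\mathcal V(Z)=\emptyset$; or it is a $\nu$-leaf; or it is a $\mu$-leaf whose companion node $m$ has $<:_m$ well-founded. A tableau is successful iff all leaves are successful. *)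

(* Defs.v *)
(* Sets of states are predicates [St -> Prop]; subsets of Sigma
   are predicates [Sigma -> Prop]; Var := nat (a countably infinite set). *)
From Stdlib Require Import List Arith Relations Wellfounded.
Import ListNotations.

Set Implicit Arguments.

Definition var := nat.

Inductive form (Sigma : Type) : Type :=
| FVar : var -> form Sigma
| FNeg : form Sigma -> form Sigma
| FAnd : form Sigma -> form Sigma -> form Sigma
| FBox : (Sigma -> Prop) -> form Sigma -> form Sigma
| FNu  : var -> form Sigma -> form Sigma.
Arguments FVar {Sigma}.

(* substitution [Z := g] of free occurrences of Z (used only with
   g = ~Z, which is always capture free) *)
Fixpoint fsubst {Sigma} (Z : var) (g : form Sigma) (f : form Sigma) : form Sigma :=
  match f with
  | FVar Y => if Nat.eqb Y Z then g else FVar Y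
  | FNeg h => FNeg (fsubst Z g h)
  | FAnd h1 h2 => FAnd (fsubst Z g h1) (fsubst Z g h2)
  | FBox K h => FBox K (fsubst Z g h)
  | FNu Y h => if Nat.eqb Y Z then FNu Y h else FNu Y (fsubst Z g h)
  end.

Definition FOr {Sigma} (f g : form Sigma) := FNeg (FAnd (FNeg f) (FNeg g)).
Definition FDia {Sigma} (K : Sigma -> Prop) (f : form Sigma) := FNeg (FBox K (FNeg f)).
Definition FMu {Sigma} (Z : var) (f : form Sigma) :=
  FNeg (FNu Z (FNeg (fsubst Z (FNeg (FVar Z)) f))).

(* every free occurrence of Z in f lies under an even number of negations
   (the boolean [odd] records the parity of negations met so far) *)
Fixpoint occ_even {Sigma} (Z : var) (odd : bool) (f : form Sigma) : Prop :=
  match f with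
  | FVar Y => Y = Z -> odd = false
  | FNeg h => occ_even Z (negb odd) h
  | FAnd h1 h2 => occ_even Z odd h1 /\ occ_even Z odd h2
  | FBox _ h => occ_even Z odd h
  | FNu Y h => if Nat.eqb Y Z then True else occ_even Z odd h
  end.

Fixpoint well_formed {Sigma} (f : form Sigma) : Prop :=
  match f with
  | FVar _ => True
  | FNeg h => well_formed h
  | FAnd h1 h2 => well_formed h1 /\ well_formed h2
  | FBox _ h => well_formed h
  | FNu Z h => occ_even Z false h /\ well_formed h
  end.

Section Semantics.
Variables (Sigma St : Type) (trans : St -> Sigma -> St -> Prop).

Definition stepK (K : Sigma -> Prop) (s s' : St) : Prop :=
  exists a, K a /\ trans s a s'.

Definition upd (V : var -> St -> Prop) (Z : var) (X : St -> Prop) : var -> St -> Prop :=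
  fun Y => if Nat.eqb Y Z then X else V Y.

Fixpoint sem (V : var -> St -> Prop) (f : form Sigma) : St -> Prop :=
  match f with
  | FVar Z => V Z
  | FNeg h => fun s => ~ sem V h s
  | FAnd h1 h2 => fun s => sem V h1 s /\ sem V h2 s
  | FBox K h => fun s => forall s', stepK K s s' -> sem V h s'
  | FNu Z h => fun s => exists X : St -> Prop,
                 X s /\ (forall t, X t -> sem (upd V Z X) h t)
  end.
End Semantics.

Inductive pform (Sigma : Type) : Type :=
| PVar  : var -> pform Sigma
| PNVar : var -> pform Sigma
| PAnd  : pform Sigma -> pform Sigma -> pform Sigma
| POr   : pform Sigma -> pform Sigma -> pform Sigma
| PBox  : (Sigma -> Prop) -> pform Sigma -> pform Sigma
| PDia  : (Sigma -> Prop) -> pform Sigma -> pform Sigma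
| PNu   : var -> pform Sigma -> pform Sigma
| PMu   : var -> pform Sigma -> pform Sigma.
Arguments PVar {Sigma}.
Arguments PNVar {Sigma}.

Fixpoint toform {Sigma} (f : pform Sigma) : form Sigma :=
  match f with
  | PVar Z => FVar Z
  | PNVar Z => FNeg (FVar Z)
  | PAnd f g => FAnd (toform f) (toform g)
  | POr f g => FOr (toform f) (toform g)
  | PBox K f => FBox K (toform f)
  | PDia K f => FDia K (toform f)
  | PNu Z f => FNu Z (toform f)
  | PMu Z f => FMu Z (toform f)
  end.

(* Phi[Z := U]: replace free occurrences of Z by the variable U.  In every
   use (rule Un) U is not bound in Phi, so this is capture free. *)
Fixpoint psubst {Sigma} (Z U : var) (f : pform Sigma) : pform Sigma :=
  match f with
  | PVar Y => if Nat.eqb Y Z then PVar U else PVar Y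
  | PNVar Y => if Nat.eqb Y Z then PNVar U else PNVar Y
  | PAnd f g => PAnd (psubst Z U f) (psubst Z U g)
  | POr f g => POr (psubst Z U f) (psubst Z U g)
  | PBox K f => PBox K (psubst Z U f)
  | PDia K f => PDia K (psubst Z U f)
  | PNu Y f => if Nat.eqb Y Z then PNu Y f else PNu Y (psubst Z U f)
  | PMu Y f => if Nat.eqb Y Z then PMu Y f else PMu Y (psubst Z U f)
  end.

Fixpoint pfree {Sigma} (U : var) (f : pform Sigma) : Prop :=
  match f with
  | PVar Y | PNVar Y => Y = U
  | PAnd f g | POr f g => pfree U f \/ pfree U g
  | PBox _ f | PDia _ f => pfree U f
  | PNu Y f | PMu Y f => Y <> U /\ pfree U f
  end.

Fixpoint pnegfree {Sigma} (U : var) (f : pform Sigma) : Prop :=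
  match f with
  | PVar _ => False
  | PNVar Y => Y = U
  | PAnd f g | POr f g => pnegfree U f \/ pnegfree U g
  | PBox _ f | PDia _ f => pnegfree U f
  | PNu Y f | PMu Y f => Y <> U /\ pnegfree U f
  end.

Fixpoint pbound {Sigma} (U : var) (f : pform Sigma) : Prop :=
  match f with
  | PVar _ | PNVar _ => False
  | PAnd f g | POr f g => pbound U f \/ pbound U g
  | PBox _ f | PDia _ f => pbound U f
  | PNu Y f | PMu Y f => Y = U \/ pbound U f
  end.

Fixpoint pmentions {Sigma} (U : var) (f : pform Sigma) : Prop :=
  match f with
  | PVar Y | PNVar Y => Y = U
  | PAnd f g | POr f g => pmentions U f \/ pmentions U g
  | PBox _ f | PDia _ f => pmentions U f
  | PNu Y f | PMu Y f => Y = U \/ pmentions U f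
  end.

Definition deflist (Sigma : Type) := list (var * pform Sigma).

Definition dom {Sigma} (D : deflist Sigma) : list var := map fst D.

Fixpoint lookup {Sigma} (D : deflist Sigma) (U : var) : option (pform Sigma) :=
  match D with
  | [] => None
  | (Y, f) :: D' => if Nat.eqb Y U then Some f else lookup D' U
  end.

Definition valid_deflist {Sigma} (D : deflist Sigma) : Prop :=
  NoDup (dom D) /\
  (forall U f, In U (dom D) -> In f (map snd D) -> ~ pbound U f) /\
  (forall i j Ui fi Uj fj, i <= j ->
      nth_error D i = Some (Ui, fi) -> nth_error D j = Some (Uj, fj) ->
      ~ pfree Uj fi).

Record sequent (Sigma St : Type) := mkSeq {
  sS : St -> Prop;
  sD : deflist Sigma;
  sF : pform Sigma }.
Arguments mkSeq {Sigma St}.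
Arguments sS {Sigma St}.
Arguments sD {Sigma St}.
Arguments sF {Sigma St}.

Definition valid_seq {Sigma St} (q : sequent Sigma St) : Prop :=
  valid_deflist (sD q) /\
  (forall U, In U (dom (sD q)) -> ~ pnegfree U (sF q) /\ ~ pbound U (sF q)).

Definition subset {St} (A B : St -> Prop) := forall s, A s -> B s.
Definition seteq {St} (A B : St -> Prop) := forall s, A s <-> B s.

(* rule labels; [RDia f] carries the witness function, [RSig U] the fresh
   variable introduced by rule (sigma Z) *)
Inductive rule (St : Type) : Type :=
| RAnd | ROr | RBox | RDia (f : St -> St) | RSig (U : var) | RUn | RThin.
Arguments RAnd {St}. Arguments ROr {St}. Arguments RBox {St}.
Arguments RSig {St}. Arguments RUn {St}. Arguments RThin {St}.

Section Tableaux.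
Variables (Sigma St : Type) (trans : St -> Sigma -> St -> Prop)
          (V : var -> St -> Prop).

Notation seq := (sequent Sigma St).

Definition fresh (U : var) (D : deflist Sigma) (f : pform Sigma) : Prop :=
  ~ In U (dom D) /\ ~ pmentions U f /\ (forall g, In g (map snd D) -> ~ pmentions U g).

Definition instance (q : seq) (r : rule St) (ps : list seq) : Prop :=
  match r with
  | RAnd => exists f g q1 q2, sF q = PAnd f g /\ ps = [q1; q2] /\
      seteq (sS q1) (sS q) /\ sD q1 = sD q /\ sF q1 = f /\
      seteq (sS q2) (sS q) /\ sD q2 = sD q /\ sF q2 = g
  | ROr => exists f g q1 q2, sF q = POr f g /\ ps = [q1; q2] /\
      sD q1 = sD q /\ sF q1 = f /\ sD q2 = sD q /\ sF q2 = g /\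
      seteq (sS q) (fun s => sS q1 s \/ sS q2 s)
  | RBox => exists K f q1, sF q = PBox K f /\ ps = [q1] /\
      sD q1 = sD q /\ sF q1 = f /\
      seteq (sS q1) (fun s' => exists s, sS q s /\ stepK trans K s s')
  | RDia w => exists K f q1, sF q = PDia K f /\ ps = [q1] /\
      (forall s, sS q s -> stepK trans K s (w s)) /\
      sD q1 = sD q /\ sF q1 = f /\
      seteq (sS q1) (fun s' => exists s, sS q s /\ s' = w s)
  | RSig U => exists q1, ps = [q1] /\
      (exists Z f, sF q = PNu Z f \/ sF q = PMu Z f) /\
      fresh U (sD q) (sF q) /\
      seteq (sS q1) (sS q) /\ sD q1 = sD q ++ [(U, sF q)] /\ sF q1 = PVar U
  | RUn => exists U Z f q1, sF q = PVar U /\ ps = [q1] /\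
      (lookup (sD q) U = Some (PNu Z f) \/ lookup (sD q) U = Some (PMu Z f)) /\
      seteq (sS q1) (sS q) /\ sD q1 = sD q /\ sF q1 = psubst Z U f
  | RThin => exists q1, ps = [q1] /\
      subset (sS q) (sS q1) /\ sD q1 = sD q /\ sF q1 = sF q
  end.

Inductive tree : Type :=
| Leaf : seq -> tree
| Int  : seq -> rule St -> list tree -> tree.

Definition label (t : tree) : seq :=
  match t with Leaf q => q | Int q _ _ => q end.

Definition addr := list nat.

Fixpoint subtree (t : tree) (p : addr) : option tree :=
  match p with
  | [] => Some t
  | i :: p' =>
      match t with
      | Leaf _ => None
      | Int _ _ cs => match nth_error cs i with
                      | Some c => subtree c p'
                      | None => None
                      end
      end
  end.

Definition local_ok (t : tree) : Prop :=
  valid_seq (label t) /\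
  match t with
  | Leaf _ => True
  | Int q r cs => instance q r (map label cs)
  end.

Variable tr : tree.

Definition node (p : addr) : Prop := subtree tr p <> None.
Definition seqAt (p : addr) : option seq := option_map label (subtree tr p).
Definition SAt (p : addr) : St -> Prop :=
  fun s => match seqAt p with Some q => sS q s | None => False end.
Definition ruleAt (p : addr) : option (rule St) :=
  match subtree tr p with Some (Int _ r _) => Some r | _ => None end.
Definition fmAt (p : addr) : option (pform Sigma) := option_map sF (seqAt p).
Definition is_leaf (p : addr) : Prop := exists q, subtree tr p = Some (Leaf q).
Definition childOf (n' n : addr) : Prop := node n' /\ exists i, n' = n ++ [i].
Definition strict_anc (m n : addr) : Prop := node n /\ exists k, k <> [] /\ n = m ++ k.

Definition sigma_leaf (n : addr) : Prop :=
  exists q U, seqAt n = Some q /\ is_leaf n /\ sF q = PVar U /\ In U (dom (sD q)) /\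
    exists m, strict_anc m n /\ fmAt m = Some (PVar U) /\ subset (SAt n) (SAt m).

Definition nu_leaf (n : addr) : Prop :=
  sigma_leaf n /\ exists q U Z f, seqAt n = Some q /\ sF q = PVar U /\
    lookup (sD q) U = Some (PNu Z f).
Definition mu_leaf (n : addr) : Prop :=
  sigma_leaf n /\ exists q U Z f, seqAt n = Some q /\ sF q = PVar U /\
    lookup (sD q) U = Some (PMu Z f).

Definition terminal (n : addr) : Prop :=
  exists q, seqAt n = Some q /\
  ( (exists Z, (sF q = PVar Z \/ sF q = PNVar Z) /\ ~ In Z (dom (sD q)))
  \/ (exists K f, sF q = PDia K f /\
        exists s, sS q s /\ ~ exists s', stepK trans K s s')
  \/ sigma_leaf n ).

Definition tableau : Prop :=
  (forall p t, subtree tr p = Some t -> local_ok t) /\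
  sD (label tr) = [] /\
  (forall n, is_leaf n -> terminal n).

Definition companion (m : addr) : Prop := ruleAt m = Some RUn.

Definition cl_cond (m n : addr) : Prop :=
  companion m /\ is_leaf n /\ strict_anc m n /\ fmAt n = fmAt m /\
  subset (SAt n) (SAt m).

(* The recursion is on the (decreasing) distance
   between m and n; the fuel [k] (initially the depth of n) bounds it. *)
Fixpoint cleaf_fuel (k : nat) (m n : addr) : Prop :=
  match k with
  | 0 => False
  | S k' => cl_cond m n /\
      ~ (exists m', companion m' /\ strict_anc m m' /\ cleaf_fuel k' m' n)
  end.
Definition comp_leaf (m n : addr) : Prop := cleaf_fuel (length n) m n.

Definition lt_step (n' n : addr) (s' s : St) : Prop :=
  childOf n' n /\ SAt n' s' /\ SAt n s /\
  match ruleAt n, fmAt n with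
  | Some RBox, Some (PBox K _) => stepK trans K s s'
  | Some (RDia w), _ => s' = w s
  | _, _ => s' = s
  end.

Inductive trace : addr -> addr -> St -> St -> Prop :=
| trace_refl n s : SAt n s -> trace n n s s
| trace_step n' m n s' s'' s :
    trace n' m s' s'' -> lt_step m n s'' s -> trace n' n s' s.

Inductive extN : addr -> addr -> St -> St -> Prop :=
| extN_base n' n s' s :
    SAt n' s' -> SAt n s -> trace n' n s' s -> extN n' n s' s
| extN_comp n' n m s' s t t' :
    SAt n' s' -> SAt n s -> companion m -> m <> n -> m <> n' ->
    SAt m t -> SAt m t' ->
    extN n' m s' t' -> extP m t' t -> trace m n t s -> extN n' n s' s
with extM : addr -> St -> St -> Prop :=
| extM_intro m m' s' s :
    companion m -> comp_leaf m m' -> SAt m' s' -> extN m' m s' s -> extM m s' s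
with extP : addr -> St -> St -> Prop :=
| extP_one m a b : extM m a b -> extP m a b
| extP_trans m a b c : extM m a b -> extP m b c -> extP m a c.

Definition successful_leaf (n : addr) : Prop :=
  exists q, seqAt n = Some q /\
  ( (exists Z, sF q = PVar Z /\ ~ In Z (dom (sD q)) /\ subset (sS q) (V Z))
  \/ (exists Z, sF q = PNVar Z /\ ~ In Z (dom (sD q)) /\
        forall s, sS q s -> ~ V Z s)
  \/ nu_leaf n
  \/ (mu_leaf n /\ exists m, comp_leaf m n /\ well_founded (extM m)) ).

Definition successful_tableau : Prop :=
  tableau /\ forall n, is_leaf n -> successful_leaf n.

End Tableaux.

(* Main.v *)
Require Import Defs.
From Stdlib Require Import List Arith Lia Bool Relations Wellfounded Classical FunctionalExtensionality PropExtensionality ClassicalEpsilon.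
Import ListNotations.

Import ListNotations.
Set Implicit Arguments.

Section A.
Variables (Sigma St : Type) (trans : St -> Sigma -> St -> Prop).

Definition psem (W : var -> St -> Prop) (g : pform Sigma) : St -> Prop :=
  sem trans W (toform g).

Lemma set_ext (X Y : St -> Prop) : (forall s, X s <-> Y s) -> X = Y.
Proof. intro H. apply functional_extensionality; intro s; apply propositional_extensionality; auto. Qed.

Lemma upd_eq (W : var -> St -> Prop) Z X : upd W Z X Z = X.
Proof. unfold upd. rewrite Nat.eqb_refl. auto. Qed.
Lemma upd_neq (W : var -> St -> Prop) Z X Y : Y <> Z -> upd W Z X Y = W Y.
Proof. intro H. unfold upd. apply Nat.eqb_neq in H. rewrite H. auto. Qed.
Lemma upd_shadow (W : var -> St -> Prop) Z X X' : upd (upd W Z X) Z X' = upd W Z X'.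
Proof. apply functional_extensionality; intro Y. unfold upd. destruct (Nat.eqb Y Z); auto. Qed.
Lemma upd_comm (W : var -> St -> Prop) Z X Y X' : Z <> Y -> upd (upd W Z X) Y X' = upd (upd W Y X') Z X.
Proof. intro H. apply functional_extensionality; intro v. unfold upd.
  destruct (Nat.eqb v Y) eqn:E1; destruct (Nat.eqb v Z) eqn:E2; auto.
  apply Nat.eqb_eq in E1; apply Nat.eqb_eq in E2; subst; congruence. Qed.

Lemma sem_fsubst (h : form Sigma) : forall Z W X,
  sem trans (upd W Z X) (fsubst Z (FNeg (FVar Z)) h) = sem trans (upd W Z (fun s => ~ X s)) h.
Proof.
  induction h; intros Z W X; simpl.
  - destruct (Nat.eqb v Z) eqn:E; simpl.
    + apply Nat.eqb_eq in E; subst. rewrite !upd_eq. auto.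
    + apply Nat.eqb_neq in E. rewrite !upd_neq; auto.
  - rewrite IHh. auto.
  - rewrite IHh1, IHh2. auto.
  - apply functional_extensionality; intro s. rewrite IHh. auto.
  - destruct (Nat.eqb v Z) eqn:E; simpl.
    + apply Nat.eqb_eq in E; subst. apply set_ext; intro s.
      split; intros [Y [H1 H2]]; exists Y; split; auto; intros t Ht; specialize (H2 t Ht);
      rewrite upd_shadow in *; auto.
    + apply Nat.eqb_neq in E. apply set_ext; intro s.
      split; intros [Y [H1 H2]]; exists Y; split; auto; intros t Ht; specialize (H2 t Ht).
      * rewrite (upd_comm W (Z:=Z) (fun s0 => ~ X s0) (Y:=v) Y) by auto.
        rewrite <- IHh. rewrite <- (upd_comm W (Z:=Z) X (Y:=v) Y) by auto. auto.
      * rewrite (upd_comm W (Z:=Z) X (Y:=v) Y) by auto.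
        rewrite IHh. rewrite <- (upd_comm W (Z:=Z) (fun s0 => ~ X s0) (Y:=v) Y) by auto. auto.
Qed.

Lemma psem_var W Z s : psem W (PVar Z) s <-> W Z s.
Proof. unfold psem; simpl; tauto. Qed.
Lemma psem_nvar W Z s : psem W (PNVar Z) s <-> ~ W Z s.
Proof. unfold psem; simpl; tauto. Qed.
Lemma psem_and W f g s : psem W (PAnd f g) s <-> psem W f s /\ psem W g s.
Proof. unfold psem; simpl; tauto. Qed.
Lemma psem_or W f g s : psem W (POr f g) s <-> psem W f s \/ psem W g s.
Proof. unfold psem; simpl. split; intro H.
  - apply NNPP; intro H'; apply H; split; intro; apply H'; auto.
  - intros [H1 H2]; destruct H; auto. Qed.
Lemma psem_box W K f s : psem W (PBox K f) s <-> forall s', stepK trans K s s' -> psem W f s'.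
Proof. unfold psem; simpl; tauto. Qed.
Lemma psem_dia W K f s : psem W (PDia K f) s <-> exists s', stepK trans K s s' /\ psem W f s'.
Proof. unfold psem; simpl. split; intro H.
  - apply NNPP; intro H'; apply H; intros s' Hs Hf; apply H'; eauto.
  - destruct H as [s' [H1 H2]]; intro H; apply (H s'); auto. Qed.
Lemma psem_nu W Z f s : psem W (PNu Z f) s <->
  exists X : St -> Prop, X s /\ forall t, X t -> psem (upd W Z X) f t.
Proof. unfold psem; simpl; tauto. Qed.
Lemma psem_mu W Z f s : psem W (PMu Z f) s <->
  forall Y : St -> Prop, (forall t, psem (upd W Z Y) f t -> Y t) -> Y s.
Proof.
  unfold psem; simpl. unfold FMu. simpl. split.
  - intros H Y HY. apply NNPP; intro Hs. apply H. exists (fun t => ~ Y t). split; auto.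
    intros t Ht. rewrite sem_fsubst. intro Hf. apply Ht. apply HY.
    replace (fun s0 => ~ ~ Y s0) with Y in Hf; auto.
    apply set_ext; intro; split; intro; [intro; contradiction|apply NNPP; auto].
  - intros H [X [HX HX']]. 
    assert (Hp : (fun t => ~ X t) s). { apply H. intros t Ht. intro Hx. apply (HX' t Hx).
      rewrite sem_fsubst. auto. }
    apply Hp; auto.
Qed.

End A.

Import ListNotations.
Set Implicit Arguments.

Section B.
Variables (Sigma St : Type) (trans : St -> Sigma -> St -> Prop).
Notation psem := (psem trans).

Lemma upd_agree (W1 W2 : var -> St -> Prop) Y X (P : var -> Prop) :
  (forall v, P v -> Y <> v -> W1 v = W2 v) -> forall v, P v -> upd W1 Y X v = upd W2 Y X v.
Proof. intros H v Hv. destruct (Nat.eq_dec v Y).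
  - subst; rewrite !upd_eq; auto.
  - rewrite !upd_neq; auto. Qed.

Lemma psem_coinc (g : pform Sigma) : forall W1 W2, (forall v, pfree v g -> W1 v = W2 v) ->
  forall s, psem W1 g s <-> psem W2 g s.
Proof.
  induction g; intros W1 W2 H s.
  - rewrite !psem_var. rewrite (H v); simpl; tauto.
  - rewrite !psem_nvar. rewrite (H v); simpl; tauto.
  - rewrite !psem_and. rewrite (IHg1 W1 W2), (IHg2 W1 W2); [tauto| |]; intros; apply H; simpl; auto.
  - rewrite !psem_or. rewrite (IHg1 W1 W2), (IHg2 W1 W2); [tauto| |]; intros; apply H; simpl; auto.
  - rewrite !psem_box. split; intros H1 s' Hs; [rewrite <- (IHg W1 W2)|rewrite (IHg W1 W2)]; auto.
  - rewrite !psem_dia. split; intros [s' [H1 H2]]; exists s'; split; auto;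
      [rewrite <- (IHg W1 W2)|rewrite (IHg W1 W2)]; auto.
  - rewrite !psem_nu. 
    assert (E : forall X t, psem (upd W1 v X) g t <-> psem (upd W2 v X) g t).
    { intros X t. apply IHg. apply upd_agree with (P := fun v0 => pfree v0 g).
      intros v0 H1 H2. apply H. simpl. auto. }
    split; intros [X [H1 H2]]; exists X; split; auto; intros t Ht; apply E; auto.
  - rewrite !psem_mu.
    assert (E : forall X t, psem (upd W1 v X) g t <-> psem (upd W2 v X) g t).
    { intros X t. apply IHg. apply upd_agree with (P := fun v0 => pfree v0 g).
      intros v0 H1 H2. apply H. simpl. auto. }
    split; intros H1 Y HY; apply H1; intros t Ht; apply HY; apply E; auto.
Qed.

Lemma psem_psubst (g : pform Sigma) : forall Z U W, ~ pbound U g ->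
  forall s, psem W (psubst Z U g) s <-> psem (upd W Z (W U)) g s.
Proof.
  induction g; intros Z U W Hb s; simpl in Hb.
  - simpl. destruct (Nat.eqb v Z) eqn:E.
    + apply Nat.eqb_eq in E; subst. rewrite !psem_var, upd_eq. tauto.
    + apply Nat.eqb_neq in E. rewrite !psem_var, upd_neq; auto. tauto.
  - simpl. destruct (Nat.eqb v Z) eqn:E.
    + apply Nat.eqb_eq in E; subst. rewrite !psem_nvar, upd_eq. tauto.
    + apply Nat.eqb_neq in E. rewrite !psem_nvar, upd_neq; auto. tauto.
  - simpl. rewrite !psem_and, IHg1, IHg2; tauto.
  - simpl. rewrite !psem_or, IHg1, IHg2; tauto.
  - simpl. rewrite !psem_box. split; intros H s' Hs; [rewrite <- IHg|rewrite IHg]; auto.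
  - simpl. rewrite !psem_dia. split; intros [s' [H1 H2]]; exists s'; split; auto;
      [rewrite <- IHg|rewrite IHg]; auto.
  - simpl. destruct (Nat.eqb v Z) eqn:E.
    + apply Nat.eqb_eq in E; subst. apply psem_coinc. intros v0 [H1 H2]. rewrite upd_neq; auto.
    + apply Nat.eqb_neq in E. rewrite !psem_nu.
      assert (Q : forall X t, psem (upd W v X) (psubst Z U g) t <-> psem (upd (upd W Z (W U)) v X) g t).
      { intros X t. rewrite IHg by tauto. rewrite upd_neq by (intro; subst; tauto).
        rewrite upd_comm by auto. tauto. }
      split; intros [X [H1 H2]]; exists X; split; auto; intros t Ht; apply Q; auto.
  - simpl. destruct (Nat.eqb v Z) eqn:E.
    + apply Nat.eqb_eq in E; subst. apply psem_coinc. intros v0 [H1 H2]. rewrite upd_neq; auto.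
    + apply Nat.eqb_neq in E. rewrite !psem_mu.
      assert (Q : forall X t, psem (upd W v X) (psubst Z U g) t <-> psem (upd (upd W Z (W U)) v X) g t).
      { intros X t. rewrite IHg by tauto. rewrite upd_neq by (intro; subst; tauto).
        rewrite upd_comm by auto. tauto. }
      split; intros H1 Y HY; apply H1; intros t Ht; apply HY; apply Q; auto.
Qed.

Lemma psem_mono (g : pform Sigma) : forall W1 W2, (forall v s, W1 v s -> W2 v s) ->
  (forall v, pnegfree v g -> W1 v = W2 v) -> forall s, psem W1 g s -> psem W2 g s.
Proof.
  induction g; intros W1 W2 Hle Heq s; simpl in Heq.
  - rewrite !psem_var. auto.
  - rewrite !psem_nvar. rewrite Heq; auto.
  - rewrite !psem_and. intros [H1 H2]; split; [eapply IHg1|eapply IHg2]; eauto.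
  - rewrite !psem_or. intros [H1|H2]; [left; eapply IHg1|right; eapply IHg2]; eauto.
  - rewrite !psem_box. intros H s' Hs; eapply IHg; eauto.
  - rewrite !psem_dia. intros [s' [H1 H2]]; exists s'; split; auto; eapply IHg; eauto.
  - rewrite !psem_nu. intros [X [H1 H2]]; exists X; split; auto; intros t Ht.
    eapply IHg; [| |apply H2; auto].
    + intros v0 s0. destruct (Nat.eq_dec v0 v); [subst; rewrite !upd_eq|rewrite !upd_neq]; auto.
    + intros v0 Hv. destruct (Nat.eq_dec v0 v); [subst; rewrite !upd_eq|rewrite !upd_neq]; auto.
  - rewrite !psem_mu. intros H Y HY. apply H. intros t Ht. apply HY.
    eapply IHg; [| |apply Ht].
    + intros v0 s0. destruct (Nat.eq_dec v0 v); [subst; rewrite !upd_eq|rewrite !upd_neq]; auto.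
    + intros v0 Hv. destruct (Nat.eq_dec v0 v); [subst; rewrite !upd_eq|rewrite !upd_neq]; auto.
Qed.

Lemma psem_mono_upd (g : pform Sigma) W Z (X Y : St -> Prop) : ~ pnegfree Z g ->
  (forall s, X s -> Y s) -> forall s, psem (upd W Z X) g s -> psem (upd W Z Y) g s.
Proof.
  intros Hn HXY. apply psem_mono.
  - intros v0 s0. destruct (Nat.eq_dec v0 Z); [subst; rewrite !upd_eq|rewrite !upd_neq]; auto.
  - intros v0 Hv. destruct (Nat.eq_dec v0 Z); [subst; tauto|rewrite !upd_neq]; auto.
Qed.

End B.

Import ListNotations.
Set Implicit Arguments.

Inductive Tower {St : Type} (F : (St -> Prop) -> (St -> Prop)) : (St -> Prop) -> Prop :=
| TwF : forall X, Tower F X -> Tower F (F X)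
| TwU : forall C : (St -> Prop) -> Prop, (forall X, C X -> Tower F X) ->
        Tower F (fun s => exists X, C X /\ X s).

Definition sub {St} (X Y : St -> Prop) := forall s, X s -> Y s.
Definition ssub {St} (X Y : St -> Prop) := sub X Y /\ X <> Y.

Section C.
Variables (St : Type) (F : (St -> Prop) -> (St -> Prop)).
Hypothesis Fmono : forall X Y, sub X Y -> sub (F X) (F Y).
Notation T := (Tower F).

Lemma sub_antisym (X Y : St -> Prop) : sub X Y -> sub Y X -> X = Y.
Proof. intros; apply set_ext; firstorder. Qed.

Lemma T_infl X : T X -> sub X (F X).
Proof.
  induction 1.
  - apply Fmono; auto.
  - intros s [Y [HY Hs]]. apply (Fmono (X := Y)). { intros t Ht; exists Y; auto. }
    apply H0; auto.
Qed.

Lemma T_below P : sub (F P) P -> forall X, T X -> sub X P.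
Proof.
  intros HP X; induction 1.
  - intros s Hs. apply HP. eapply Fmono; eauto.
  - intros s [Y [HY Hs]]. eapply H0; eauto.
Qed.

Definition extreme (c : St -> Prop) := forall x, T x -> sub x c -> x <> c -> sub (F x) c.

Lemma L1 c : T c -> extreme c -> forall x, T x -> sub x c \/ sub (F c) x.
Proof.
  intros Tc Ec x; induction 1 as [y Ty IH|C HC IH].
  - destruct IH as [H|H].
    + destruct (classic (y = c)) as [E|E].
      * subst. right. intros s; auto.
      * left. apply Ec; auto.
    + right. intros s Hs. apply (T_infl Ty). auto.
  - destruct (classic (exists y, C y /\ sub (F c) y)) as [[y [Hy Hs]]|N].
    + right. intros s H. exists y; auto.
    + left. intros s [y [Hy Hs]]. destruct (IH y Hy) as [H|H].
      * auto.
      * exfalso; apply N; eauto.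
Qed.

Lemma L2 c : T c -> extreme c.
Proof.
  induction 1 as [d Td IH|C HC IH].
  - intros x Tx Hx Hne. destruct (L1 Td IH Tx) as [H|H].
    + destruct (classic (x = d)) as [E|E].
      * subst. intros s; auto.
      * intros s Hs. apply (T_infl Td). apply (IH x Tx H E); auto.
    + exfalso; apply Hne. apply sub_antisym; auto.
  - intros x Tx Hx Hne.
    destruct (classic (exists y, C y /\ ~ sub y x)) as [[y [Hy Hn]]|N].
    + destruct (L1 (HC y Hy) (IH y Hy) Tx) as [H|H].
      * assert (x <> y) by (intro; subst; apply Hn; intros s; auto).
        intros s Hs. exists y. split; auto. apply (IH y Hy x Tx H H0); auto.
      * exfalso. apply Hn. intros s Hs. apply H. apply (T_infl (HC y Hy)); auto.
    + exfalso. apply Hne. apply sub_antisym; [exact Hx|].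
      intros s [y [Hy Hs]]. apply NNPP; intro Hs'.
      apply N. exists y. split; [auto|]. intro Hsub; apply Hs'; auto.
Qed.

Lemma T_chain x y : T x -> T y -> sub x y \/ sub y x.
Proof.
  intros Tx Ty. destruct (L1 Ty (L2 Ty) Tx) as [H|H]; auto.
  right. intros s Hs. apply H. apply (T_infl Ty); auto.
Qed.

Lemma T_step x y : T x -> T y -> ssub y x -> sub (F y) x.
Proof. intros Tx Ty [H1 H2]. apply (L2 Tx); auto. Qed.

Definition Top : St -> Prop := fun s => exists X, T X /\ X s.
Lemma T_top : T Top.
Proof. apply TwU. auto. Qed.
Lemma Top_prefixed : sub (F Top) Top.
Proof. intros s Hs. exists (F Top). split; auto. apply TwF, T_top. Qed.

Lemma T_wf : well_founded (fun Y X => T Y /\ ssub Y X).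
Proof.
  assert (HT : forall X, T X -> Acc (fun Y X => T Y /\ ssub Y X) X).
  { intros X TX. apply NNPP; intro NA.
    set (B := fun Y => T Y /\ ~ Acc (fun Y X => T Y /\ ssub Y X) Y).
    set (L := fun s => exists Y, (T Y /\ forall Z, B Z -> sub Y Z) /\ Y s).
    assert (TL : T L) by (apply TwU; intros Y [HY _]; auto).
    assert (LB : forall Z, B Z -> sub L Z) by (intros Z HZ s [Y [[_ HY] Hs]]; apply (HY Z HZ); auto).
    assert (BL : B L).
    { destruct (classic (forall Z, B Z -> sub (F L) Z)) as [H|H].
      - assert (sub (F L) L) by (intros s Hs; exists (F L); split; [split; [apply TwF; auto|auto]|auto]).
        assert (E : X = L).
        { apply sub_antisym; [apply T_below; auto|apply LB; split; auto]. }
        subst; split; auto.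
      - apply not_all_ex_not in H. destruct H as [Z HZ].
        apply imply_to_and in HZ. destruct HZ as [BZ HZ].
        assert (TZ : T Z) by (destruct BZ; auto).
        destruct (T_chain (TwF TL) TZ) as [H|H]; [contradiction|].
        destruct (classic (L = Z)) as [E|E]; [subst; auto|].
        exfalso. apply HZ. apply T_step; auto. split; auto. }
    destruct BL as [_ BL]. apply BL. constructor. intros Y [TY [HY1 HY2]].
    apply NNPP; intro NY. apply HY2. apply sub_antisym; auto. apply LB. split; auto. }
  intros X. constructor. intros Y [TY _]. apply HT; auto.
Qed.

Lemma T_succ X s : T X -> X s -> (forall Y, T Y -> ssub Y X -> ~ Y s) ->
  exists P, T P /\ ssub P X /\ F P s.
Proof.
  intros TX Hs Hmin.
  set (P := fun t => exists Y, (T Y /\ ssub Y X) /\ Y t).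
  assert (TP : T P) by (apply TwU; intros Y [HY _]; auto).
  assert (nP : ~ P s) by (intros [Y [[TY HY] HYs]]; apply (Hmin Y TY HY); auto).
  assert (PX : sub P X) by (intros t [Y [[TY [HY _]] Ht]]; auto).
  exists P. split; auto. split. { split; auto. intro E; apply nP; rewrite E; auto. }
  destruct (T_chain TX (TwF TP)) as [H|H]; [apply H; auto|].
  destruct (classic (F P = X)) as [E|E]; [rewrite E; auto|].
  exfalso. apply nP.
  assert (FP : sub (F P) P).
  { intros t Ht. exists (F P). split; auto. split; [apply TwF; auto|split; auto]. }
  apply (T_below FP TX); auto.
Qed.

End C.

Import ListNotations.
Set Implicit Arguments.

Section D.
Variables (Sigma St : Type) (trans : St -> Sigma -> St -> Prop).
Notation psem := (psem trans).
Notation pf := (pform Sigma).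
Notation dl := (deflist Sigma).
Notation rk := (list (St -> Prop)).

Definition Fof (W : var -> St -> Prop) Z (f : pf) : (St -> Prop) -> (St -> Prop) :=
  fun Y => psem (upd W Z Y) f.

Definition entry_ok W (g : pf) (X : St -> Prop) : Prop :=
  match g with PMu Z f => Tower (Fof W Z f) X | _ => X = psem W g end.

Fixpoint adm W (D : dl) (r : rk) : Prop :=
  match D, r with
  | [], [] => True
  | (U, g) :: D', X :: r' => entry_ok W g X /\ adm (upd W U X) D' r'
  | _, _ => False
  end.

Fixpoint valof W (D : dl) (r : rk) : var -> St -> Prop :=
  match D, r with
  | (U, g) :: D', X :: r' => valof (upd W U X) D' r'
  | _, _ => W
  end.

Fixpoint lexlt W (D : dl) (r1 r2 : rk) : Prop :=
  match D, r1, r2 with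
  | (U, g) :: D', X1 :: r1', X2 :: r2' =>
      ssub X1 X2 \/ (X1 = X2 /\ lexlt (upd W U X1) D' r1' r2')
  | _, _, _ => False
  end.
Definition lexle W D r1 r2 := lexlt W D r1 r2 \/ r1 = r2.

Definition binder_pos (g : pf) : Prop :=
  match g with PMu Z f | PNu Z f => ~ pnegfree Z f | _ => True end.
Definition defs_ok (D : dl) : Prop := forall U g, In (U, g) D -> binder_pos g.

Lemma Fof_mono W Z f : ~ pnegfree Z f -> forall X Y, sub X Y -> sub (Fof W Z f X) (Fof W Z f Y).
Proof. intros H X Y HXY s. unfold Fof. apply psem_mono_upd; auto. Qed.

Lemma defs_ok_tl U g D : defs_ok ((U, g) :: D) -> defs_ok D.
Proof. intros H U' g' Hi. apply (H U'); simpl; auto. Qed.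

Lemma adm_length W D r : adm W D r -> length r = length D.
Proof. revert W r; induction D as [|[U g] D IH]; intros W [|X r] H; simpl in *; try tauto.
  f_equal. eapply IH. apply H. Qed.

Lemma ssub_trans (X Y Z : St -> Prop) : ssub X Y -> ssub Y Z -> ssub X Z.
Proof. intros [H1 H2] [H3 H4]. split. intros s Hs; auto.
  intro E; subst. apply H2. apply sub_antisym; auto. Qed.

Lemma lexlt_trans D : forall W r1 r2 r3, lexlt W D r1 r2 -> lexlt W D r2 r3 -> lexlt W D r1 r3.
Proof.
  induction D as [|[U g] D IH]; intros W [|X1 r1] [|X2 r2] [|X3 r3]; simpl; try tauto.
  intros [H1|[E1 H1]] [H2|[E2 H2]]; subst.
  - left; eapply ssub_trans; eauto.
  - left; auto.
  - left; auto.
  - right; split; auto. eapply IH; eauto.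
Qed.

Lemma lexlt_irrefl D : forall W r, ~ lexlt W D r r.
Proof. induction D as [|[U g] D IH]; intros W [|X r]; simpl; try tauto.
  intros [[_ H]|[_ H]]; [auto|eapply IH; eauto]. Qed.

Lemma lexle_trans D W r1 r2 r3 : lexle W D r1 r2 -> lexle W D r2 r3 -> lexle W D r1 r3.
Proof. intros [H1|H1] [H2|H2]; subst; unfold lexle; auto. left; eapply lexlt_trans; eauto. Qed.
Lemma lexle_lt_trans D W r1 r2 r3 : lexle W D r1 r2 -> lexlt W D r2 r3 -> lexlt W D r1 r3.
Proof. intros [H1|H1] H2; subst; auto. eapply lexlt_trans; eauto. Qed.
Lemma lexlt_le_trans D W r1 r2 r3 : lexlt W D r1 r2 -> lexle W D r2 r3 -> lexlt W D r1 r3.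
Proof. intros H1 [H2|H2]; subst; auto. eapply lexlt_trans; eauto. Qed.

Lemma lex_total D : forall W r1 r2, defs_ok D -> adm W D r1 -> adm W D r2 ->
  lexlt W D r1 r2 \/ r1 = r2 \/ lexlt W D r2 r1.
Proof.
  induction D as [|[U g] D IH]; intros W [|X1 r1] [|X2 r2] Hok H1 H2; simpl in *; try tauto.
  destruct H1 as [E1 H1], H2 as [E2 H2].
  assert (C : X1 = X2 \/ ssub X1 X2 \/ ssub X2 X1).
  { destruct (classic (X1 = X2)) as [E|E]; [auto|right].
    destruct g; unfold entry_ok in E1, E2; try (subst; tauto).
    assert (Hm : ~ pnegfree v g) by (apply (Hok U (PMu v g)); simpl; auto).
    destruct (T_chain (Fof_mono W v g Hm) E1 E2) as [S|S].
    - left; split; auto.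
    - right; split; auto. }
  destruct C as [E|[C|C]].
  - subst X2. destruct (IH (upd W U X1) r1 r2 (defs_ok_tl Hok) H1 H2) as [L|[L|L]].
    + left; right; auto.
    + subst; auto.
    + right; right; right; auto.
  - left; left; auto.
  - right; right; left; auto.
Qed.

Definition lexR W D (r1 r2 : rk) := adm W D r1 /\ lexlt W D r1 r2.

Lemma lex_wf D : forall W, defs_ok D -> well_founded (lexR W D).
Proof.
  induction D as [|[U g] D IH]; intros W Hok.
  - intros r. constructor. intros r' [_ H]. destruct r'; simpl in H; tauto.
  - set (RX := fun Y X => entry_ok W g Y /\ ssub Y X).
    assert (WX : well_founded RX).
    { destruct g; unfold RX, entry_ok;
        try (intros X; constructor; intros Y [E _]; constructor; intros Y' [E' [_ N]]; subst; tauto).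
      apply (wf_incl _ _ (fun Y X => Tower (Fof W v g) Y /\ ssub Y X)).
      - intros Y X H; auto.
      - apply T_wf. apply Fof_mono. apply (Hok U (PMu v g)); simpl; auto. }
    assert (K : forall X, Acc RX X -> forall r', Acc (lexR (upd W U X) D) r' ->
                  Acc (lexR W ((U, g) :: D)) (X :: r')).
    { intros X AX. induction AX as [X _ IHX]. intros r' Ar'. induction Ar' as [r' _ IHr].
      constructor. intros [|X1 r1] [Ha Hl]; simpl in Ha; [tauto|].
      destruct Ha as [Ea Ha]. simpl in Hl. destruct Hl as [Hl|[El Hl]].
      + apply IHX. split; auto. apply IH. eapply defs_ok_tl; eauto.
      + subst X1. apply IHr. split; auto. }
    intros [|X r].
    + constructor. intros [|X1 r1] [_ H]; simpl in H; tauto.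
    + apply K; auto. apply IH. eapply defs_ok_tl; eauto.
Qed.

Definition Cand W D g s := exists r, adm W D r /\ psem (valof W D r) g s.
Definition least W D g s r := adm W D r /\ psem (valof W D r) g s /\
  forall r', adm W D r' -> psem (valof W D r') g s -> lexle W D r r'.

Lemma least_exists W D g s : defs_ok D -> Cand W D g s -> exists r, least W D g s r.
Proof.
  intros Hok [r0 [A0 P0]]. apply NNPP; intro N.
  assert (K : forall r, Acc (lexR W D) r -> ~ (adm W D r /\ psem (valof W D r) g s)).
  { intros r Ar. induction Ar as [r _ IH]. intros [Ar Pr].
    apply N. exists r. split; auto. split; auto. intros r' Ar' Pr'.
    apply NNPP; intro Nle.
    destruct (lex_total W r r' Hok Ar Ar') as [L|[L|L]].
    - apply Nle; left; auto.
    - apply Nle; right; auto.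
    - apply (IH r'); [split; auto|auto]. }
  apply (K r0 (lex_wf W Hok r0)); auto.
Qed.

Definition rank W D g s : rk := epsilon (inhabits (@nil (St -> Prop))) (least W D g s).

Lemma rank_least W D g s : defs_ok D -> Cand W D g s -> least W D g s (rank W D g s).
Proof. intros Hok HC. unfold rank. apply epsilon_spec. apply least_exists; auto. Qed.

Lemma adm_app D1 : forall W D2 r, adm W (D1 ++ D2) r ->
  adm W D1 (firstn (length D1) r) /\ adm (valof W D1 (firstn (length D1) r)) D2 (skipn (length D1) r).
Proof.
  induction D1 as [|[U g] D1 IH]; intros W D2 r H; simpl in *.
  - auto.
  - destruct r as [|X r]; [tauto|]. simpl. destruct H as [E H]. 
    destruct (IH _ _ _ H). auto.
Qed.

Lemma adm_app2 D1 : forall W D2 r1 r2, adm W D1 r1 -> adm (valof W D1 r1) D2 r2 -> adm W (D1 ++ D2) (r1 ++ r2).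
Proof.
  induction D1 as [|[U g] D1 IH]; intros W D2 [|X r1] r2 H1 H2; simpl in *; try tauto.
  destruct H1; split; auto.
Qed.

Lemma valof_app D1 : forall W D2 r1 r2, length r1 = length D1 ->
  valof W (D1 ++ D2) (r1 ++ r2) = valof (valof W D1 r1) D2 r2.
Proof.
  induction D1 as [|[U g] D1 IH]; intros W D2 [|X r1] r2 H; simpl in *; try discriminate; auto.
Qed.

Lemma valof_notin D : forall W r v, ~ In v (dom D) -> valof W D r v = W v.
Proof.
  induction D as [|[U g] D IH]; intros W [|X r] v H; simpl in *; auto.
  rewrite IH by tauto. rewrite upd_neq; auto.
Qed.

Lemma lexle_firstn D1 : forall W D2 r1 r2, lexle W (D1 ++ D2) r1 r2 ->
  lexle W D1 (firstn (length D1) r1) (firstn (length D1) r2).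
Proof.
  induction D1 as [|[U g] D1 IH]; intros W D2 r1 r2 H; simpl.
  - right; auto.
  - destruct H as [H|H]; [|subst; right; auto].
    destruct r1 as [|X1 r1]; destruct r2 as [|X2 r2]; simpl in H; try tauto.
    simpl. destruct H as [H|[E H]].
    + left; left; auto.
    + subst X2. destruct (IH (upd W U X1) D2 r1 r2 (or_introl H)) as [L|L].
      * left; right; auto.
      * right; rewrite L; auto.
Qed.

Lemma lexlt_mid D1 : forall W U g D2 r0 X Y ra rb, length r0 = length D1 -> ssub X Y ->
  lexlt W (D1 ++ (U, g) :: D2) (r0 ++ X :: ra) (r0 ++ Y :: rb).
Proof.
  induction D1 as [|[U' g'] D1 IH]; intros W U g D2 [|Z r0] X Y ra rb Hl Hs; simpl in *;
    try discriminate; auto.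
Qed.

Lemma adm_exists D : forall W, exists r, adm W D r.
Proof.
  induction D as [|[U g] D IH]; intros W.
  - exists []; simpl; auto.
  - set (X := match g with PMu Z f => (fun s : St => exists Y, False /\ Y s) | _ => psem W g end).
    assert (E : entry_ok W g X).
    { destruct g; unfold entry_ok, X; auto. apply TwU. tauto. }
    destruct (IH (upd W U X)) as [r Hr]. exists (X :: r). simpl; auto.
Qed.

End D.

Import ListNotations.
Set Implicit Arguments.

Section E.
Variable Sigma : Type.
Notation pf := (pform Sigma).
Notation dl := (deflist Sigma).

Fixpoint pwf (f : pf) : Prop :=
  match f with
  | PVar _ | PNVar _ => True
  | PAnd f g | POr f g => pwf f /\ pwf g
  | PBox _ f | PDia _ f => pwf f
  | PNu Z f | PMu Z f => ~ pnegfree Z f /\ pwf f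
  end.

Fixpoint psize (f : pf) : nat :=
  match f with
  | PVar _ | PNVar _ => 1
  | PAnd f g | POr f g => S (psize f + psize g)
  | PBox _ f | PDia _ f => S (psize f)
  | PNu _ f | PMu _ f => S (psize f)
  end.

Fixpoint maxvar (f : pf) : nat :=
  match f with
  | PVar Y | PNVar Y => Y
  | PAnd f g | POr f g => max (maxvar f) (maxvar g)
  | PBox _ f | PDia _ f => maxvar f
  | PNu Y f | PMu Y f => max Y (maxvar f)
  end.

Definition maxvar_dl (D : dl) : nat :=
  fold_right (fun p m => max (max (fst p) (maxvar (snd p))) m) 0 D.

Definition fv (D : dl) (f : pf) : var := S (max (maxvar_dl D) (maxvar f)).

Lemma pment_le U (f : pf) : pmentions U f -> U <= maxvar f.
Proof. induction f; simpl; intros; try lia; try (destruct H; [subst|]; lia);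
  try (destruct H; [apply IHf1 in H|apply IHf2 in H]; lia); auto.
  destruct H; [lia|apply IHf in H; lia]. destruct H; [lia|apply IHf in H; lia]. Qed.

Lemma maxvar_dl_in (D : dl) U g : In (U, g) D -> U <= maxvar_dl D /\ maxvar g <= maxvar_dl D.
Proof. induction D as [|[U' g'] D IH]; simpl; [tauto|]. intros [E|H].
  - inversion E; subst; lia.
  - apply IH in H; lia. Qed.

Lemma in_dom_iff (D : dl) U : In U (dom D) <-> exists g, In (U, g) D.
Proof. unfold dom. rewrite in_map_iff. split.
  - intros [[a b] [E H]]; simpl in E; subst; eauto.
  - intros [g H]; exists (U, g); auto. Qed.

Lemma in_snd_iff (D : dl) g : In g (map snd D) <-> exists U, In (U, g) D.
Proof. rewrite in_map_iff. split.
  - intros [[a b] [E H]]; simpl in E; subst; eauto.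
  - intros [U H]; exists (U, g); auto. Qed.

Lemma fv_fresh (D : dl) (f : pf) : fresh (fv D f) D f.
Proof.
  unfold fresh, fv. split; [|split].
  - intro H. apply in_dom_iff in H. destruct H as [g H]. apply maxvar_dl_in in H. lia.
  - intro H. apply pment_le in H. lia.
  - intros g Hg H. apply in_snd_iff in Hg. destruct Hg as [U Hg]. apply maxvar_dl_in in Hg.
    apply pment_le in H. lia.
Qed.

Lemma pfree_ment U (f : pf) : pfree U f -> pmentions U f.
Proof. induction f; simpl; tauto. Qed.
Lemma pbound_ment U (f : pf) : pbound U f -> pmentions U f.
Proof. induction f; simpl; tauto. Qed.
Lemma pnegfree_free U (f : pf) : pnegfree U f -> pfree U f.
Proof. induction f; simpl; tauto. Qed.

Lemma psize_psubst Z U (g : pf) : psize (psubst Z U g) = psize g.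
Proof. induction g; simpl; try destruct (Nat.eqb v Z); simpl; auto. Qed.

Lemma pbound_psubst Z U w (g : pf) : pbound w (psubst Z U g) <-> pbound w g.
Proof. induction g; simpl; try destruct (Nat.eqb v Z); simpl; try tauto. Qed.

Lemma pnegfree_psubst Z U w (g : pf) : pnegfree w (psubst Z U g) ->
  (w <> Z /\ pnegfree w g) \/ (w = U /\ pnegfree Z g).
Proof.
  induction g; simpl; try tauto.
  - destruct (Nat.eqb v Z) eqn:E; simpl; intro H; tauto.
  - destruct (Nat.eqb v Z) eqn:E; simpl; intro H.
    + apply Nat.eqb_eq in E; subst. auto.
    + apply Nat.eqb_neq in E; subst. left; split; auto.
  - destruct (Nat.eqb v Z) eqn:E; simpl; intros [H1 H2].
    + apply Nat.eqb_eq in E; subst. left; split; auto.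
    + apply Nat.eqb_neq in E. destruct (IHg H2) as [[A B]|[A B]]; [left|right]; repeat split; auto; congruence.
  - destruct (Nat.eqb v Z) eqn:E; simpl; intros [H1 H2].
    + apply Nat.eqb_eq in E; subst. left; split; auto.
    + apply Nat.eqb_neq in E. destruct (IHg H2) as [[A B]|[A B]]; [left|right]; repeat split; auto; congruence.
Qed.

Lemma pwf_psubst Z U (g : pf) : ~ pbound U g -> pwf g -> pwf (psubst Z U g).
Proof.
  induction g; simpl; intros Hb Hw; try tauto; try (destruct (Nat.eqb v Z); simpl; tauto).
  - destruct (Nat.eqb v Z) eqn:E; simpl; [tauto|]. apply Nat.eqb_neq in E.
    split; [|tauto]. intro H. apply pnegfree_psubst in H. destruct H as [[_ H]|[H _]]; tauto.
  - destruct (Nat.eqb v Z) eqn:E; simpl; [tauto|]. apply Nat.eqb_neq in E.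
    split; [|tauto]. intro H. apply pnegfree_psubst in H. destruct H as [[_ H]|[H _]]; tauto.
Qed.

Lemma occ_fsubst_other Y Z (h : form Sigma) : Y <> Z -> forall b,
  occ_even Z b (fsubst Y (FNeg (FVar Y)) h) <-> occ_even Z b h.
Proof.
  intro HYZ; induction h; intro b; simpl.
  - destruct (Nat.eqb v Y) eqn:E; simpl; [apply Nat.eqb_eq in E; subst|]; tauto.
  - apply IHh.
  - rewrite IHh1, IHh2; tauto.
  - apply IHh.
  - destruct (Nat.eqb v Y); simpl; [tauto|]. destruct (Nat.eqb v Z); [tauto|apply IHh].
Qed.

Lemma occ_fsubst_self Z (h : form Sigma) : forall b,
  occ_even Z b (fsubst Z (FNeg (FVar Z)) h) <-> occ_even Z (negb b) h.
Proof.
  induction h; intro b; simpl.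
  - destruct (Nat.eqb v Z) eqn:E; simpl.
    + apply Nat.eqb_eq in E; subst. tauto.
    + apply Nat.eqb_neq in E. split; intros _ H; congruence.
  - apply IHh.
  - rewrite IHh1, IHh2; tauto.
  - apply IHh.
  - destruct (Nat.eqb v Z) eqn:E; simpl; [rewrite E; tauto|]. rewrite E. apply IHh.
Qed.

Lemma wf_fsubst Z (h : form Sigma) : well_formed (fsubst Z (FNeg (FVar Z)) h) -> well_formed h.
Proof.
  induction h; simpl; auto; try tauto.
  destruct (Nat.eqb v Z) eqn:E; simpl; [tauto|]. apply Nat.eqb_neq in E.
  intros [H1 H2]; split; auto. rewrite <- occ_fsubst_other; eauto.
Qed.

Lemma occ_neg Z (f : pf) : forall b, occ_even Z b (toform f) -> pnegfree Z f -> b = true.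
Proof.
  induction f; intros b Ho Hn; simpl in *; try tauto.
  - destruct b; auto. simpl in Ho. specialize (Ho Hn). discriminate.
  - destruct Hn; [apply IHf1|apply IHf2]; tauto.
  - rewrite negb_involutive in Ho. destruct Hn; [apply IHf1|apply IHf2]; tauto.
  - apply IHf; tauto.
  - rewrite negb_involutive in Ho. apply IHf; tauto.
  - destruct Hn as [H1 H2]. destruct (Nat.eqb v Z) eqn:E; [apply Nat.eqb_eq in E; congruence|].
    apply IHf; auto.
  - destruct Hn as [H1 H2]. destruct (Nat.eqb v Z) eqn:E; [apply Nat.eqb_eq in E; congruence|].
    rewrite negb_involutive in Ho. rewrite occ_fsubst_other in Ho by auto. apply IHf; auto.
Qed.

Lemma wf_pwf (f : pf) : well_formed (toform f) -> pwf f.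
Proof.
  induction f; simpl; auto; try tauto.
  - intros [H1 H2]. split; auto. intro H. apply (occ_neg _ _ _ H1) in H. discriminate.
  - intros [H1 H2]. rewrite occ_fsubst_self in H1. simpl in H1. split.
    + intro H. apply (occ_neg _ _ _ H1) in H. discriminate.
    + apply IHf. eapply wf_fsubst; eauto.
Qed.

End E.

Import ListNotations.
Unset Implicit Arguments.

Lemma nodup_app_disj {A : Type} (l1 l2 : list A) a : NoDup (l1 ++ l2) -> In a l1 -> ~ In a l2.
Proof. induction l1; simpl; intros H1 H2; [tauto|]. inversion H1; subst.
  destruct H2 as [E|H2]; [subst|auto]. intro. apply H3. apply in_or_app; auto. Qed.

Section F0.
Variables (Sigma St : Type) (trans : St -> Sigma -> St -> Prop) (V : var -> St -> Prop).
Notation psem := (psem trans).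
Notation pf := (pform Sigma).
Notation dl := (deflist Sigma).
Notation adm := (adm trans).
Notation Cand := (Cand trans V).
Notation rnk := (rank trans V).

Lemma dom_app (D1 D2 : dl) : dom (D1 ++ D2) = dom D1 ++ dom D2.
Proof. unfold dom; apply map_app. Qed.

Lemma lookup_in (D : dl) U g : lookup D U = Some g -> In U (dom D).
Proof. induction D as [|[U' g'] D IH]; simpl; [discriminate|].
  destruct (Nat.eqb U' U) eqn:E; [apply Nat.eqb_eq in E; auto|]. intro H; right; auto. Qed.

Lemma lookup_app (D1 D2 : dl) U : In U (dom D1) -> lookup (D1 ++ D2) U = lookup D1 U.
Proof. induction D1 as [|[U' g'] D IH]; simpl; [tauto|].
  destruct (Nat.eqb U' U) eqn:E; auto. apply Nat.eqb_neq in E. intros [H|H]; [congruence|auto]. Qed.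

Lemma lookup_last (D : dl) U f : ~ In U (dom D) -> lookup (D ++ [(U, f)]) U = Some f.
Proof. induction D as [|[U' g'] D IH]; simpl; [rewrite Nat.eqb_refl; auto|].
  intro H. destruct (Nat.eqb U' U) eqn:E; [apply Nat.eqb_eq in E; tauto|]. apply IH; tauto. Qed.

Lemma valof_restrict (D1 E : dl) r U : adm V (D1 ++ E) r -> ~ In U (dom E) ->
  valof V (D1 ++ E) r U = valof V D1 (firstn (length D1) r) U.
Proof.
  intros Ha Hn. destruct (adm_app _ _ _ _ _ Ha) as [H1 H2].
  rewrite <- (firstn_skipn (length D1) r) at 1.
  rewrite valof_app. - apply valof_notin; auto.
  - apply adm_length in H1. auto.
Qed.

Lemma cand_restrict (D1 E : dl) U s r : NoDup (dom (D1 ++ E)) -> In U (dom D1) ->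
  adm V (D1 ++ E) r -> psem (valof V (D1 ++ E) r) (PVar U) s ->
  adm V D1 (firstn (length D1) r) /\ psem (valof V D1 (firstn (length D1) r)) (PVar U) s.
Proof.
  intros Hnd Hin Ha Hp. destruct (adm_app _ _ _ _ _ Ha) as [H1 H2]. split; auto.
  rewrite psem_var in *. rewrite <- (valof_restrict D1 E); auto.
  rewrite dom_app in Hnd. eapply nodup_app_disj; eauto.
Qed.

Lemma rank_restrict (D1 E : dl) U s : defs_ok (D1 ++ E) -> NoDup (dom (D1 ++ E)) -> In U (dom D1) ->
  Cand (D1 ++ E) (PVar U) s ->
  Cand D1 (PVar U) s /\ lexle V D1 (rnk D1 (PVar U) s) (firstn (length D1) (rnk (D1 ++ E) (PVar U) s)).
Proof.
  intros Hok Hnd Hin HC.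
  destruct (rank_least Hok HC) as [Ha [Hp _]].
  destruct (cand_restrict D1 E U s _ Hnd Hin Ha Hp) as [A1 P1].
  assert (HC1 : Cand D1 (PVar U) s) by (exists (firstn (length D1) (rnk (D1 ++ E) (PVar U) s)); auto).
  split; auto.
  assert (Hok1 : defs_ok D1) by (intros U' g' Hi; apply (Hok U'); apply in_or_app; auto).
  destruct (rank_least Hok1 HC1) as [_ [_ L]]. apply L; auto.
Qed.

Lemma adm_snoc_inv (D : dl) U f r : adm V (D ++ [(U, f)]) r ->
  exists r0 X, r = r0 ++ [X] /\ adm V D r0 /\ entry_ok trans (valof V D r0) f X /\
  valof V (D ++ [(U, f)]) r = upd (valof V D r0) U X.
Proof.
  intro Ha. destruct (adm_app _ _ _ _ _ Ha) as [H1 H2].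
  assert (Hl := adm_length _ _ _ _ Ha). rewrite length_app in Hl; simpl in Hl.
  remember (skipn (length D) r) as rr. destruct rr as [|X [|Y rr]]; simpl in H2; try tauto.
  exists (firstn (length D) r), X. destruct H2 as [H2 _].
  assert (E : r = firstn (length D) r ++ [X]) by (rewrite Heqrr; symmetry; apply firstn_skipn).
  repeat split; auto.
  rewrite E at 1. rewrite valof_app. - simpl. auto.
  - apply adm_length in H1. auto.
Qed.

Definition is_sig (f : pf) := exists Z g, f = PNu Z g \/ f = PMu Z g.

Lemma sig_ext (D : dl) U f s r : is_sig f -> binder_pos f -> adm V D r -> psem (valof V D r) f s ->
  exists X, adm V (D ++ [(U, f)]) (r ++ [X]) /\ psem (valof V (D ++ [(U, f)]) (r ++ [X])) (PVar U) s.
Proof.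
  intros [Z [g [Ef|Ef]]] Hpos Ha Hp; subst f.
  - exists (psem (valof V D r) (PNu Z g)). split.
    + apply adm_app2; auto. simpl. split; auto.
    + rewrite valof_app by (eapply adm_length; eauto). simpl. rewrite psem_var, upd_eq. auto.
  - exists (Top (Fof trans (valof V D r) Z g)). split.
    + apply adm_app2; auto. simpl. split; auto. apply T_top.
    + rewrite valof_app by (eapply adm_length; eauto). simpl. rewrite psem_var, upd_eq.
      rewrite psem_mu in Hp. apply Hp. intros t Ht. apply (Top_prefixed (Fof trans (valof V D r) Z g)). exact Ht.
Qed.

Lemma firstn_len {A : Type} (l : list A) n : length l = n -> firstn n l = l.
Proof. intro; subst; apply firstn_all2; auto. Qed.

Lemma rank_sig (D : dl) U f s : is_sig f -> defs_ok (D ++ [(U, f)]) -> Cand D f s ->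
  Cand (D ++ [(U, f)]) (PVar U) s /\
  lexle V D (firstn (length D) (rnk (D ++ [(U, f)]) (PVar U) s)) (rnk D f s).
Proof.
  intros Hs Hok HC.
  assert (Hok1 : defs_ok D) by (intros U' g' Hi; apply (Hok U'); apply in_or_app; auto).
  destruct (rank_least Hok1 HC) as [Ha [Hp _]].
  assert (Hpos : binder_pos f) by (apply (Hok U); apply in_or_app; simpl; auto).
  destruct (sig_ext D U f s _ Hs Hpos Ha Hp) as [X [A1 P1]].
  assert (HC1 : Cand (D ++ [(U, f)]) (PVar U) s) by (exists (rnk D f s ++ [X]); auto).
  split; auto.
  destruct (rank_least Hok HC1) as [_ [_ L]]. specialize (L _ A1 P1).
  apply lexle_firstn in L. rewrite firstn_app in L.
  rewrite (firstn_len (rnk D f s)) in L by (eapply adm_length; eauto).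
  rewrite (adm_length _ _ _ _ Ha) in L. rewrite Nat.sub_diag in L. simpl in L. rewrite app_nil_r in L. auto.
Qed.

Lemma unfold_nu (D : dl) U Z g s r : ~ pmentions U g -> U <> Z -> ~ pnegfree Z g ->
  adm V (D ++ [(U, PNu Z g)]) r -> psem (valof V (D ++ [(U, PNu Z g)]) r) (PVar U) s ->
  psem (valof V (D ++ [(U, PNu Z g)]) r) (psubst Z U g) s.
Proof.
  intros Hm HUZ Hpos Ha Hp. destruct (adm_snoc_inv _ _ _ _ Ha) as [r0 [X [Er [A0 [Ee Ev]]]]].
  rewrite Ev in *. rewrite psem_var, upd_eq in Hp. simpl in Ee. subst X.
  rewrite psem_psubst by (intro; apply Hm; apply pbound_ment; auto). rewrite upd_eq.
  set (W0 := valof V D r0) in *.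
  assert (Hag : forall v, pfree v g -> upd (upd W0 U (psem W0 (PNu Z g))) Z (psem W0 (PNu Z g)) v = upd W0 Z (psem W0 (PNu Z g)) v).
  { intros v Hv. unfold upd. destruct (Nat.eqb v Z) eqn:E1; auto. destruct (Nat.eqb v U) eqn:E2; auto.
    apply Nat.eqb_eq in E2; subst; exfalso; apply Hm; apply pfree_ment; auto. }
  apply (proj2 (psem_coinc trans g _ _ Hag s)).
  assert (Hp' := Hp). rewrite psem_nu in Hp'. destruct Hp' as [Y [HY1 HY2]].
  apply (psem_mono_upd trans g W0 Z Y _ Hpos); auto.
  intros t Ht. rewrite psem_nu. exists Y; auto.
Qed.

Lemma unfold_mu (D : dl) U Z g s r : ~ pmentions U g -> U <> Z -> ~ pnegfree Z g ->
  least trans V (D ++ [(U, PMu Z g)]) (PVar U) s r ->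
  exists r', adm V (D ++ [(U, PMu Z g)]) r' /\ lexlt V (D ++ [(U, PMu Z g)]) r' r /\
    psem (valof V (D ++ [(U, PMu Z g)]) r') (psubst Z U g) s.
Proof.
  intros Hm HUZ Hpos [Ha [Hp Hl]]. destruct (adm_snoc_inv _ _ _ _ Ha) as [r0 [X [Er [A0 [Ee Ev]]]]].
  rewrite Ev in Hp. rewrite psem_var, upd_eq in Hp. simpl in Ee.
  set (W0 := valof V D r0) in *.
  assert (Fm : forall X Y, sub X Y -> sub (Fof trans W0 Z g X) (Fof trans W0 Z g Y)) by (apply Fof_mono; auto).
  assert (Hmin : forall Y, Tower (Fof trans W0 Z g) Y -> ssub Y X -> ~ Y s).
  { intros Y TY HY HYs.
    assert (AY : adm V (D ++ [(U, PMu Z g)]) (r0 ++ [Y])) by (apply adm_app2; auto; simpl; auto).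
    assert (PY : psem (valof V (D ++ [(U, PMu Z g)]) (r0 ++ [Y])) (PVar U) s).
    { rewrite valof_app by (eapply adm_length; eauto). simpl. rewrite psem_var, upd_eq. auto. }
    specialize (Hl _ AY PY).
    assert (Lt : lexlt V (D ++ [(U, PMu Z g)]) (r0 ++ [Y]) r).
    { rewrite Er. apply lexlt_mid; auto. eapply adm_length; eauto. }
    eapply lexlt_irrefl. eapply lexle_lt_trans; eauto. }
  destruct (T_succ Fm Ee Hp Hmin) as [P [TP [SP FP]]].
  exists (r0 ++ [P]). split; [|split].
  - apply adm_app2; auto; simpl; auto.
  - rewrite Er. apply lexlt_mid; auto. eapply adm_length; eauto.
  - rewrite valof_app by (eapply adm_length; eauto). simpl.
    rewrite psem_psubst by (intro; apply Hm; apply pbound_ment; auto). rewrite upd_eq.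
    assert (Hag : forall v, pfree v g -> upd (upd W0 U P) Z P v = upd W0 Z P v).
  { intros v Hv. unfold upd. destruct (Nat.eqb v Z) eqn:E1; auto. destruct (Nat.eqb v U) eqn:E2; auto.
    apply Nat.eqb_eq in E2; subst; exfalso; apply Hm; apply pfree_ment; auto. }
    apply (proj2 (psem_coinc trans g _ _ Hag s)).
    exact FP.
Qed.

End F0.

Import ListNotations.
Unset Implicit Arguments.

Section F1.
Variables (Sigma St : Type) (trans : St -> Sigma -> St -> Prop) (V : var -> St -> Prop).
Notation psem := (psem trans).
Notation pf := (pform Sigma).
Notation dl := (deflist Sigma).
Notation seq := (sequent Sigma St).
Notation tree := (tree Sigma St).
Notation adm := (adm trans).
Definition CandV D g s := Cand trans V D g s.
Definition rnk D g s := rank trans V D g s.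

Definition orL (D : dl) f1 f2 (A : St -> Prop) : St -> Prop :=
  fun s => A s /\ psem (valof V D (rnk D (POr f1 f2) s)) f1 s.
Definition orR (D : dl) f1 f2 (A : St -> Prop) : St -> Prop :=
  fun s => A s /\ ~ psem (valof V D (rnk D (POr f1 f2) s)) f1 s.
Definition post K (A : St -> Prop) : St -> Prop := fun s' => exists s, A s /\ stepK trans K s s'.
Definition wit (D : dl) K f : St -> St := fun s =>
  epsilon (inhabits s) (fun t => stepK trans K s t /\ psem (valof V D (rnk D (PDia K f) s)) f t).
Definition img (w : St -> St) (A : St -> Prop) : St -> Prop := fun s' => exists s, A s /\ s' = w s.

Fixpoint build (n : nat) (D : dl) (A : St -> Prop) (f : pf) : tree :=
  match n with
  | 0 => Leaf (mkSeq A D f)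
  | S n' =>
    match f with
    | PVar _ | PNVar _ => Leaf (mkSeq A D f)
    | PAnd f1 f2 => Int (mkSeq A D f) RAnd [build n' D A f1; build n' D A f2]
    | POr f1 f2 => Int (mkSeq A D f) ROr [build n' D (orL D f1 f2 A) f1; build n' D (orR D f1 f2 A) f2]
    | PBox K g => Int (mkSeq A D f) RBox [build n' D (post K A) g]
    | PDia K g => Int (mkSeq A D f) (RDia (wit D K g)) [build n' D (img (wit D K g) A) g]
    | PNu Z g | PMu Z g =>
       let U := fv D f in let D' := D ++ [(U, f)] in let T := CandV D' (PVar U) in
       Int (mkSeq A D f) (RSig U) [Int (mkSeq A D' (PVar U)) RThin
         [Int (mkSeq T D' (PVar U)) RUn [build n' D' T (psubst Z U g)]]]
    end
  end.

Definition stepcond (r : rule St) (f : pf) (s s' : St) : Prop :=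
  match r, f with
  | RBox, PBox K _ => stepK trans K s s'
  | RDia w, _ => s' = w s
  | _, _ => s' = s
  end.

Definition RankStep (q : seq) (r : rule St) (q' : seq) : Prop :=
  forall s' s, sS q' s' -> sS q s -> stepcond r (sF q) s s' ->
    lexle V (sD q) (firstn (length (sD q)) (rnk (sD q') (sF q') s')) (rnk (sD q) (sF q) s) /\
    (r = RUn -> forall U Z g, sF q = PVar U -> lookup (sD q) U = Some (PMu Z g) ->
      lexlt V (sD q) (firstn (length (sD q)) (rnk (sD q') (sF q') s')) (rnk (sD q) (sF q) s)).

Definition NodeOK (t : tree) : Prop :=
  local_ok trans t /\ (forall s, sS (label t) s -> CandV (sD (label t)) (sF (label t)) s) /\
  defs_ok (sD (label t)) /\
  match t with
  | Leaf _ => True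
  | Int q r cs => forall c, In c cs -> (exists E, sD (label c) = sD q ++ E) /\ RankStep q r (label c)
  end.

Definition AllSub (P : tree -> Prop) (t : tree) : Prop := forall p t', subtree t p = Some t' -> P t'.

Lemma AllSub_Leaf P q : P (Leaf q) -> AllSub P (Leaf q).
Proof. intros H [|i p] t' E; simpl in E; [inversion E; subst; auto|discriminate]. Qed.

Lemma AllSub_Int P q r cs : P (Int q r cs) -> (forall c, In c cs -> AllSub P c) -> AllSub P (Int q r cs).
Proof. intros H Hc [|i p] t' E; simpl in E; [inversion E; subst; auto|].
  destruct (nth_error cs i) eqn:En; [|discriminate]. apply (Hc t (nth_error_In _ _ En) p); auto. Qed.

Lemma subtree_app (t : tree) p1 p2 : subtree t (p1 ++ p2) =
  match subtree t p1 with Some t1 => subtree t1 p2 | None => None end.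
Proof. revert t; induction p1 as [|i p IH]; intro t; simpl; auto.
  destruct t; auto. destruct (nth_error l i); auto. Qed.

Lemma AllSub_sub P t p t' : AllSub P t -> subtree t p = Some t' -> AllSub P t'.
Proof. intros H E p' t'' E'. apply (H (p ++ p')).
  rewrite subtree_app, E. auto. Qed.

Definition LeafProp (D : dl) (t : tree) : Prop :=
  forall p q, subtree t p = Some (Leaf q) ->
   (exists Z, (sF q = PVar Z \/ sF q = PNVar Z) /\ ~ In Z (dom (sD q))) \/
   (exists U, sF q = PVar U /\ In U (dom (sD q)) /\
     (In U (dom D) \/
      exists m k q' cs, p = m ++ k /\ k <> [] /\ subtree t m = Some (Int q' RUn cs) /\
        sF q' = PVar U /\ sS q' = CandV (sD q') (PVar U) /\
        forall m' k1 k2 q'' cs'', m' = m ++ k1 -> k1 <> [] -> p = m' ++ k2 -> k2 <> [] ->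
           subtree t m' = Some (Int q'' RUn cs'') -> sF q'' = PVar U -> False)).

Definition UnProp (D : dl) (t : tree) : Prop :=
  forall m q cs U, subtree t m = Some (Int q RUn cs) -> sF q = PVar U -> ~ In U (dom D).

Lemma LeafProp_Int D q r cs : (forall c, In c cs -> LeafProp D c) -> LeafProp D (Int q r cs).
Proof.
  intros H [|i p] q0 E; simpl in E; [discriminate|].
  destruct (nth_error cs i) as [c|] eqn:En; [|discriminate].
  destruct (H c (nth_error_In _ _ En) p q0 E) as [L|[U [L1 [L2 L3]]]]; [left; auto|right].
  exists U; split; auto; split; auto. destruct L3 as [L3|[m [k [q' [cs' [E1 [E2 [E3 [E4 [E5 E6]]]]]]]]]]; [left; auto|right].
  exists (i :: m), k, q', cs'. subst p. split; auto. split; auto. split; [simpl; rewrite En; auto|].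
  split; auto. split; auto.
  intros m' k1 k2 q'' cs'' F1 F2 F3 F4 F5 F6. subst m'. simpl in F5. rewrite En in F5.
  apply (E6 (m ++ k1) k1 k2 q'' cs''); auto. simpl in F3. inversion F3; auto.
Qed.

Lemma UnProp_Int D q r cs : r <> RUn -> (forall c, In c cs -> UnProp D c) -> UnProp D (Int q r cs).
Proof.
  intros Hr H [|i p] q0 cs0 U E; simpl in E; [inversion E; subst; tauto|].
  destruct (nth_error cs i) as [c|] eqn:En; [|discriminate].
  apply (H c (nth_error_In _ _ En) p q0 cs0 U E).
Qed.

Lemma LeafProp_Leaf D q : (exists Z, (sF q = PVar Z \/ sF q = PNVar Z) /\ ~ In Z (dom (sD q))) \/
   (exists U, sF q = PVar U /\ In U (dom (sD q)) /\ In U (dom D)) -> LeafProp D (Leaf q).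
Proof.
  intros H [|i p] q0 E; simpl in E; [inversion E; subst|discriminate].
  destruct H as [H|[U [H1 [H2 H3]]]]; [left; auto|right; exists U; auto].
Qed.

Lemma UnProp_Leaf D q : UnProp D (Leaf q).
Proof. intros [|i p] q0 cs0 U E; simpl in E; discriminate. Qed.

End F1.

Import ListNotations.
Unset Implicit Arguments.

Section F2.
Variables (Sigma St : Type) (trans : St -> Sigma -> St -> Prop) (V : var -> St -> Prop).
Notation psem := (psem trans).
Notation pf := (pform Sigma).
Notation dl := (deflist Sigma).
Notation seq := (sequent Sigma St).
Notation tree := (tree Sigma St).
Notation adm := (adm trans).
Notation CandV := (CandV Sigma St trans V).
Notation rnk := (rnk Sigma St trans V).
Notation NodeOK := (NodeOK Sigma St trans V).
Notation build := (build Sigma St trans V).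

Definition DefsInv (D : dl) : Prop :=
  (forall U g, In (U, g) D -> pwf g /\ is_sig Sigma g) /\
  (forall U g, In U (dom D) -> In g (map snd D) -> ~ pnegfree U g).

Definition Inv n (D : dl) (A : St -> Prop) (f : pf) : Prop :=
  psize f <= n /\ DefsInv D /\ valid_seq (mkSeq A D f) /\ pwf f /\
  (forall s, A s -> CandV D f s).

Lemma defs_ok_of D : DefsInv D -> defs_ok D.
Proof. intros [H _] U g Hi. destruct (H U g Hi) as [Hw [Z [h [E|E]]]]; subst; simpl in *; tauto. Qed.

Lemma psize_pos (f : pf) : 1 <= psize f.
Proof. destruct f; simpl; lia. Qed.

Lemma valid_sub (A A' : St -> Prop) D (f f' : pf) :
  (forall U, pnegfree U f' -> pnegfree U f) -> (forall U, pbound U f' -> pbound U f) ->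
  valid_seq (mkSeq A D f) -> valid_seq (mkSeq A' D f').
Proof. intros H1 H2 [Hv Hd]; split; auto. simpl in *. intros U HU. destruct (Hd U HU); split; auto. Qed.

Lemma rank_le_same (D : dl) f f' s s' : defs_ok D -> CandV D f s ->
  psem (valof V D (rnk D f s)) f' s' ->
  CandV D f' s' /\ lexle V D (firstn (length D) (rnk D f' s')) (rnk D f s).
Proof.
  intros Hok HC Hp. destruct (rank_least Hok HC) as [Ha [_ _]].
  assert (HC' : CandV D f' s') by (exists (rnk D f s); auto). split; auto.
  destruct (rank_least Hok HC') as [Ha' [_ L]].
  rewrite firstn_len by (eapply adm_length; eauto). apply L; auto.
Qed.

Lemma nodeok_same q r cs : local_ok trans (Int q r cs) ->
  (forall s, sS q s -> CandV (sD q) (sF q) s) -> defs_ok (sD q) -> r <> RUn ->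
  (forall c, In c cs -> sD (label c) = sD q /\ forall s' s, sS (label c) s' -> sS q s ->
     stepcond Sigma St trans r (sF q) s s' -> psem (valof V (sD q) (rnk (sD q) (sF q) s)) (sF (label c)) s') ->
  NodeOK (Int q r cs).
Proof.
  intros Hl Hs Hok Hr Hc. split; auto. split; auto. split; auto. simpl.
  intros c Hin. destruct (Hc c Hin) as [ED Hstep]. split; [exists []; rewrite app_nil_r; auto|].
  intros s' s H1 H2 H3. split; [|intro; contradiction].
  rewrite ED. apply rank_le_same; auto.
Qed.

Lemma wit_spec (D : dl) K g s : defs_ok D -> CandV D (PDia K g) s ->
  stepK trans K s (wit Sigma St trans V D K g s) /\
  psem (valof V D (rnk D (PDia K g) s)) g (wit Sigma St trans V D K g s).
Proof.
  intros Hok HC. destruct (rank_least Hok HC) as [_ [Hp _]]. rewrite psem_dia in Hp.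
  unfold wit. apply (epsilon_spec (inhabits s) (fun t => stepK trans K s t /\ psem (valof V D (rnk D (PDia K g) s)) g t)).
  exact Hp.
Qed.

Lemma valid_snoc (D : dl) U f : valid_deflist D -> fresh U D f -> (forall U0, In U0 (dom D) -> ~ pbound U0 f) ->
  valid_deflist (D ++ [(U, f)]).
Proof.
  intros [H1 [H2 H3]] [F1 [F2 F3]] Hb. split; [|split].
  - rewrite dom_app. simpl. apply NoDup_app; auto. constructor; auto. constructor.
    intros a Ha [E|E]; [subst; auto|contradiction].
  - intros U0 g HU Hg. rewrite dom_app in HU. rewrite map_app in Hg. simpl in *.
    apply in_app_or in HU; apply in_app_or in Hg.
    destruct HU as [HU|[HU|HU]]; destruct Hg as [Hg|[Hg|Hg]]; try contradiction; subst.
    + apply H2; auto.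
    + apply Hb; auto.
    + intro X; apply (F3 g Hg); apply pbound_ment; auto.
    + intro X; apply F2; apply pbound_ment; auto.
  - intros i j Ui fi Uj fj Hij Ei Ej.
    destruct (Nat.lt_ge_cases j (length D)) as [Hj|Hj].
    + rewrite nth_error_app1 in Ej by auto. rewrite nth_error_app1 in Ei by lia. exact (H3 i j Ui fi Uj fj Hij Ei Ej).
    + rewrite nth_error_app2 in Ej by auto. destruct (j - length D) as [|k] eqn:Ek; simpl in Ej;
        [|destruct k; discriminate]. inversion Ej; subst Uj fj.
      destruct (Nat.lt_ge_cases i (length D)) as [Hi|Hi].
      * rewrite nth_error_app1 in Ei by auto. apply nth_error_In in Ei.
        intro X. apply (F3 fi). { apply in_snd_iff. eauto. } apply pfree_ment; auto.
      * rewrite nth_error_app2 in Ei by auto. destruct (i - length D) as [|k] eqn:Ek'; simpl in Ei;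
          [|destruct k; discriminate]. inversion Ei; subst. intro X; apply F2; apply pfree_ment; auto.
Qed.

End F2.

Import ListNotations.
Unset Implicit Arguments.

Section F3.
Variables (Sigma St : Type) (trans : St -> Sigma -> St -> Prop) (V : var -> St -> Prop).
Notation psem := (psem trans).
Notation pf := (pform Sigma).
Notation dl := (deflist Sigma).
Notation seq := (sequent Sigma St).
Notation tree := (tree Sigma St).
Notation adm := (adm trans).
Notation CandV := (CandV Sigma St trans V).
Notation rnk := (rnk Sigma St trans V).
Notation NodeOK := (NodeOK Sigma St trans V).
Notation build := (build Sigma St trans V).
Notation Inv := (Inv Sigma St trans V).
Notation AllSub := (AllSub Sigma St).
Notation LeafProp := (LeafProp Sigma St trans V).
Notation UnProp := (UnProp Sigma St).
Notation defs_ok_of := (defs_ok_of Sigma St V).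
Notation rank_le_same := (rank_le_same Sigma St trans V).
Notation nodeok_same := (nodeok_same Sigma St trans V).
Notation wit_spec := (wit_spec Sigma St trans V).
Notation rank_sig := (rank_sig Sigma St trans V).
Notation unfold_nu := (unfold_nu Sigma St trans V).
Notation unfold_mu := (unfold_mu Sigma St trans V).
Notation stepcond := (stepcond Sigma St trans).
Notation orL := (orL Sigma St trans V).
Notation orR := (orR Sigma St trans V).
Notation post := (post Sigma St trans).
Notation wit := (wit Sigma St trans V).
Notation lookup_last := (lookup_last Sigma St V).
Notation lookup_app := (lookup_app Sigma St V).

Definition BuildOK (D : dl) A (f : pf) (t : tree) : Prop :=
  AllSub NodeOK t /\ label t = mkSeq A D f /\ LeafProp D t /\ UnProp D t.

Lemma simple_ok D A f r cs : NodeOK (Int (mkSeq A D f) r cs) -> r <> RUn ->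
  (forall c, In c cs -> AllSub NodeOK c /\ LeafProp D c /\ UnProp D c) ->
  BuildOK D A f (Int (mkSeq A D f) r cs).
Proof.
  intros H Hr Hc. split; [|split; [auto|split]].
  - apply AllSub_Int; auto. intros c Hi; apply Hc; auto.
  - apply LeafProp_Int. intros c Hi; apply Hc; auto.
  - apply UnProp_Int; auto. intros c Hi; apply Hc; auto.
Qed.

Lemma case_lit n D A f : Inv (S n) D A f -> (forall Z, f = PVar Z \/ f = PNVar Z) \/ True ->
  (exists Z, f = PVar Z \/ f = PNVar Z) -> BuildOK D A f (Leaf (mkSeq A D f)).
Proof.
  intros [Hs [HD [Hv [Hw Hsd]]]] _ [Z HZ].
  split; [|split; [auto|split]].
  - apply AllSub_Leaf. split; [split; auto|]. split; auto. split; auto. apply defs_ok_of; auto.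
  - apply LeafProp_Leaf. simpl. destruct (classic (In Z (dom D))) as [Hin|Hn].
    + destruct HZ as [E|E]; subst.
      * right. exists Z; simpl; repeat split; auto.
      * exfalso. destruct Hv as [_ Hv]. destruct (Hv Z Hin) as [H1 _]. apply H1. simpl. auto.
    + left. exists Z; split; auto.
  - apply UnProp_Leaf.
Qed.


Definition IHT n := forall D A f, Inv n D A f -> BuildOK D A f (build n D A f).

Lemma inv_sub n D A A' (f f' : pf) : Inv (S n) D A f -> psize f' <= n ->
  (forall U, pnegfree U f' -> pnegfree U f) -> (forall U, pbound U f' -> pbound U f) ->
  pwf f' -> (forall s, A' s -> CandV D f' s) -> Inv n D A' f'.
Proof. intros [Hs [HD [Hv [Hw Hsd]]]] H1 H2 H3 H4 H5. split; auto. split; auto.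
  split; [eapply valid_sub; eauto|]. split; auto. Qed.

Lemma case_and n D A f1 f2 : IHT n -> Inv (S n) D A (PAnd f1 f2) ->
  BuildOK D A (PAnd f1 f2) (build (S n) D A (PAnd f1 f2)).
Proof.
  intros IH HI. assert (HI' := HI). destruct HI' as [Hs [HD [Hv [Hw Hsd]]]].
  assert (Hok := defs_ok_of D HD). simpl in Hs, Hw.
  assert (I1 : Inv n D A f1).
  { eapply inv_sub; eauto; simpl; try lia; try tauto.
    intros s Hs'. destruct (Hsd s Hs') as [r [Ha Hp]]. exists r. split; auto. rewrite psem_and in Hp; tauto. }
  assert (I2 : Inv n D A f2).
  { eapply inv_sub; eauto; simpl; try lia; try tauto.
    intros s Hs'. destruct (Hsd s Hs') as [r [Ha Hp]]. exists r. split; auto. rewrite psem_and in Hp; tauto. }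
  destruct (IH _ _ _ I1) as [A1 [L1 [P1 U1]]]. destruct (IH _ _ _ I2) as [A2 [L2 [P2 U2]]].
  simpl build. apply simple_ok; [| discriminate |].
  - apply nodeok_same; simpl; auto; [| discriminate |].
    + split; [exact Hv|]. simpl. rewrite L1, L2.
      exists f1, f2, (mkSeq A D f1), (mkSeq A D f2). repeat split; simpl; auto.
    + intros c [Hc|[Hc|[]]]; subst c; [rewrite L1|rewrite L2]; split; simpl; auto;
      intros s' s H1 H2 H3; simpl in H3; subst;
      destruct (rank_least Hok (Hsd s H2)) as [_ [Hp _]]; rewrite psem_and in Hp; tauto.
  - intros c [Hc|[Hc|[]]]; subst c; auto.
Qed.


Lemma case_or n D A f1 f2 : IHT n -> Inv (S n) D A (POr f1 f2) ->
  BuildOK D A (POr f1 f2) (build (S n) D A (POr f1 f2)).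
Proof.
  intros IH HI. assert (HI' := HI). destruct HI' as [Hs [HD [Hv [Hw Hsd]]]].
  assert (Hok := defs_ok_of D HD). simpl in Hs, Hw.
  assert (I1 : Inv n D (orL D f1 f2 A) f1).
  { eapply inv_sub; eauto; simpl; try lia; try tauto.
    intros s [Hs' Hp]. exists (rnk D (POr f1 f2) s). split; auto.
    destruct (rank_least Hok (Hsd s Hs')) as [Ha _]; auto. }
  assert (I2 : Inv n D (orR D f1 f2 A) f2).
  { eapply inv_sub; eauto; simpl; try lia; try tauto.
    intros s [Hs' Hp]. exists (rnk D (POr f1 f2) s).
    destruct (rank_least Hok (Hsd s Hs')) as [Ha [Hq _]]. split; auto.
    rewrite psem_or in Hq. tauto. }
  destruct (IH _ _ _ I1) as [A1 [L1 [P1 U1]]]. destruct (IH _ _ _ I2) as [A2 [L2 [P2 U2]]].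
  simpl build. apply simple_ok; [| discriminate |].
  - apply nodeok_same; simpl; auto; [| discriminate |].
    + split; [exact Hv|]. simpl. rewrite L1, L2.
      exists f1, f2, (mkSeq (orL D f1 f2 A) D f1), (mkSeq (orR D f1 f2 A) D f2). repeat split; simpl; auto.
      * intros Ha. destruct (classic (psem (valof V D (rnk D (POr f1 f2) s)) f1 s)); [left|right]; split; auto.
      * intros [[H _]|[H _]]; auto.
    + intros c [Hc|[Hc|[]]]; subst c; [rewrite L1|rewrite L2]; split; simpl; auto;
      intros s' s H1 H2 H3; simpl in H3; subst.
      * destruct H1; auto.
      * destruct H1 as [_ H1]. destruct (rank_least Hok (Hsd s H2)) as [_ [Hp _]].
        rewrite psem_or in Hp. tauto.
  - intros c [Hc|[Hc|[]]]; subst c; auto.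
Qed.

Lemma case_box n D A K g : IHT n -> Inv (S n) D A (PBox K g) ->
  BuildOK D A (PBox K g) (build (S n) D A (PBox K g)).
Proof.
  intros IH HI. assert (HI' := HI). destruct HI' as [Hs [HD [Hv [Hw Hsd]]]].
  assert (Hok := defs_ok_of D HD). simpl in Hs, Hw.
  assert (I1 : Inv n D (post K A) g).
  { eapply inv_sub; eauto; simpl; try lia; try tauto.
    intros s' [s [Hs' Hst]]. exists (rnk D (PBox K g) s).
    destruct (rank_least Hok (Hsd s Hs')) as [Ha [Hq _]]. split; auto.
    rewrite psem_box in Hq. auto. }
  destruct (IH _ _ _ I1) as [A1 [L1 [P1 U1]]].
  simpl build. apply simple_ok; [| discriminate |].
  - apply nodeok_same; simpl; auto; [| discriminate |].
    + split; [exact Hv|]. simpl. rewrite L1.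
      exists K, g, (mkSeq (post K A) D g). repeat split; simpl; auto.
    + intros c [Hc|[]]; subst c; rewrite L1; split; simpl; auto;
      intros s' s H1 H2 H3; simpl in H3.
      destruct (rank_least Hok (Hsd s H2)) as [_ [Hp _]]. rewrite psem_box in Hp. auto.
  - intros c [Hc|[]]; subst c; auto.
Qed.

Lemma case_dia n D A K g : IHT n -> Inv (S n) D A (PDia K g) ->
  BuildOK D A (PDia K g) (build (S n) D A (PDia K g)).
Proof.
  intros IH HI. assert (HI' := HI). destruct HI' as [Hs [HD [Hv [Hw Hsd]]]].
  assert (Hok := defs_ok_of D HD). simpl in Hs, Hw.
  assert (I1 : Inv n D (img St (wit D K g) A) g).
  { eapply inv_sub; eauto; simpl; try lia; try tauto.
    intros s' [s [Hs' Hst]]. subst s'. exists (rnk D (PDia K g) s).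
    destruct (rank_least Hok (Hsd s Hs')) as [Ha _]. split; auto.
    apply (wit_spec D K g s Hok (Hsd s Hs')). }
  destruct (IH _ _ _ I1) as [A1 [L1 [P1 U1]]].
  simpl build. apply simple_ok; [| discriminate |].
  - apply nodeok_same; simpl; auto; [| discriminate |].
    + split; [exact Hv|]. simpl. rewrite L1.
      exists K, g, (mkSeq (img St (wit D K g) A) D g). repeat split; simpl; auto.
      intros s Hs'. apply (wit_spec D K g s Hok (Hsd s Hs')).
    + intros c [Hc|[]]; subst c; rewrite L1; split; simpl; auto;
      intros s' s H1 H2 H3; simpl in H3. subst s'.
      apply (wit_spec D K g s Hok (Hsd s H2)).
  - intros c [Hc|[]]; subst c; auto.
Qed.


Definition sigtree n (D : dl) A (f : pf) Z (g : pf) : tree :=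
  Int (mkSeq A D f) (RSig (fv D f))
    [Int (mkSeq A (D ++ [(fv D f, f)]) (PVar (fv D f))) RThin
      [Int (mkSeq (CandV (D ++ [(fv D f, f)]) (PVar (fv D f))) (D ++ [(fv D f, f)]) (PVar (fv D f))) RUn
        [build n (D ++ [(fv D f, f)]) (CandV (D ++ [(fv D f, f)]) (PVar (fv D f))) (psubst Z (fv D f) g)]]].

Lemma case_sig n D A f Z g : IHT n -> (f = PNu Z g \/ f = PMu Z g) -> Inv (S n) D A f ->
  BuildOK D A f (sigtree n D A f Z g).
Proof.
  intros IH Hf HI. assert (HI' := HI). destruct HI' as [Hs [HD [Hv [Hw Hsd]]]].
  unfold sigtree.
  set (U := fv D f). set (D' := D ++ [(U, f)]). set (T := CandV D' (PVar U)).
  assert (Hfr : fresh U D f) by apply fv_fresh.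
  destruct Hfr as [Fr1 [Fr2 Fr3]].
  assert (Hsig : is_sig Sigma f) by (exists Z, g; auto).
  assert (HmU : ~ pmentions U g) by (intro X; apply Fr2; destruct Hf; subst f; simpl; auto).
  assert (HUZ : U <> Z) by (intro X; apply Fr2; destruct Hf; subst f; simpl; auto).
  assert (Hpos : ~ pnegfree Z g) by (destruct Hf; subst f; simpl in Hw; tauto).
  assert (Hwg : pwf g) by (destruct Hf; subst f; simpl in Hw; tauto).
  assert (Hsz : psize g <= n) by (destruct Hf; subst f; simpl in Hs; lia).
  assert (Hok := defs_ok_of D HD).
  assert (HVD' : valid_deflist D').
  { apply valid_snoc; [apply Hv| split; auto|]. intros U0 H0. apply (proj2 Hv U0 H0). }
  assert (HD' : DefsInv Sigma D').
  { split.
    - intros U0 h Hi. unfold D' in Hi. apply in_app_or in Hi. destruct Hi as [Hi|[Hi|[]]].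
      + apply (proj1 HD U0 h Hi).
      + inversion Hi; subst; auto.
    - intros U0 h HU0 Hh. unfold D' in HU0, Hh. rewrite dom_app in HU0. rewrite map_app in Hh.
      simpl in HU0, Hh. apply in_app_or in HU0; apply in_app_or in Hh.
      destruct HU0 as [HU0|[HU0|[]]]; destruct Hh as [Hh|[Hh|[]]]; subst.
      + apply (proj2 HD); auto.
      + apply (proj2 Hv U0 HU0).
      + intro X. apply (Fr3 h Hh). apply pfree_ment, pnegfree_free; auto.
      + intro X. apply Fr2. apply pfree_ment, pnegfree_free; auto. }
  assert (Hok' := defs_ok_of D' HD').
  assert (HlU : lookup D' U = Some f) by (apply lookup_last; auto).
  assert (HUin : In U (dom D')) by (unfold D'; rewrite dom_app; apply in_or_app; simpl; auto).
  assert (VU : forall X : St -> Prop, valid_seq (mkSeq X D' (PVar U))).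
  { intro X. split; [exact HVD'|]. intros U0 _. simpl. tauto. }
  assert (AT : forall s, A s -> T s).
  { intros s Hs'. apply (rank_sig D U f s Hsig Hok' (Hsd s Hs')). }
  assert (VB : valid_seq (mkSeq T D' (psubst Z U g))).
  { split; [exact HVD'|]. intros U0 HU0. simpl in HU0 |- *. unfold D' in HU0. rewrite dom_app in HU0.
    simpl in HU0. apply in_app_or in HU0. split.
    - intro X. apply pnegfree_psubst in X. destruct X as [[X1 X2]|[X1 X2]]; [|tauto].
      destruct HU0 as [HU0|[HU0|[]]].
      + apply (proj1 (proj2 Hv U0 HU0)). simpl. destruct Hf; subst f; simpl; auto.
      + subst U0. apply HmU. apply pfree_ment, pnegfree_free; auto.
    - intro X. apply pbound_psubst in X. destruct HU0 as [HU0|[HU0|[]]].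
      + apply (proj2 (proj2 Hv U0 HU0)). simpl. destruct Hf; subst f; simpl; auto.
      + subst U0. apply HmU. apply pbound_ment; auto. }
  assert (BS : forall s, T s -> CandV D' (psubst Z U g) s).
  { intros s HT. destruct Hf as [E|E]; subst f.
    - destruct HT as [r [Ha Hp]]. exists r. split; auto. apply unfold_nu; auto.
    - destruct (unfold_mu D U Z g s _ HmU HUZ Hpos (rank_least Hok' HT)) as [r' [Ha [_ Hp]]].
      exists r'; auto. }
  assert (IB : Inv n D' T (psubst Z U g)).
  { split; [rewrite psize_psubst; auto|]. split; auto. split; auto. split; auto.
    apply pwf_psubst; auto. intro X; apply HmU; apply pbound_ment; auto. }
  destruct (IH _ _ _ IB) as [A3 [L3 [P3 U3]]].
  set (t3 := build n D' T (psubst Z U g)) in *.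
  split; [|split; [reflexivity|split]].
  -
    apply AllSub_Int.
    { split; [split; [exact Hv|]|]. 
      - simpl. exists (mkSeq A D' (PVar U)). split; auto. split; [exists Z, g; auto|].
        split; [split; auto|]. split; [intro; simpl; tauto|]. split; auto.
      - split; auto. split; auto. simpl. intros c [Hc|[]]; subst c. split; [exists [(U, f)]; auto|].
        intros s' s H1 H2 H3. simpl in H1, H2, H3. subst s'. split; [|intro; discriminate].
        apply (rank_sig D U f s Hsig Hok' (Hsd s H2)). }
    intros c [Hc|[]]; subst c. apply AllSub_Int.
    { split; [split; [apply VU|]|].
      - simpl. exists (mkSeq T D' (PVar U)). repeat split; try (intros s Hs'; apply AT; auto); auto.
      - split; [intros s Hs'; apply AT; auto|]. split; auto. simpl. intros c [Hc|[]]; subst c.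
        split; [exists []; rewrite app_nil_r; auto|].
        intros s' s H1 H2 H3. simpl in H1, H2, H3. subst s'. split; [|intro; discriminate].
        destruct (rank_least Hok' (AT s H2)) as [Ha _].
        rewrite firstn_len by (eapply adm_length; eauto). right; auto. }
    intros c [Hc|[]]; subst c. apply AllSub_Int.
    { split; [split; [apply VU|]|].
      - simpl. rewrite L3. exists U, Z, g, (mkSeq T D' (psubst Z U g)). split; auto. split; auto.
        split; [rewrite HlU; destruct Hf; subst f; auto|]. split; [intro; simpl; tauto|]. auto.
      - split; [intros s Hs'; exact Hs'|]. split; auto. simpl. intros c [Hc|[]]; subst c.
        rewrite L3. simpl. split; [exists []; rewrite app_nil_r; auto|].
        intros s' s H1 H2 H3. simpl in H3. subst s'.
        destruct (rank_least Hok' H2) as [Ha [Hp Hl]].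
        destruct Hf as [E|E]; subst f.
        + split; [|intros _ U0 Z0 g0 E0 E1; simpl in E0, E1; inversion E0; subst U0; rewrite HlU in E1; discriminate].
          apply (rank_le_same D' (PVar U) (psubst Z U g) s s Hok' H2). apply unfold_nu; auto.
        + destruct (unfold_mu D U Z g s _ HmU HUZ Hpos (rank_least Hok' H2)) as [r' [Ha' [Lt Hp']]].
          assert (HC' : CandV D' (psubst Z U g) s) by (exists r'; auto).
          destruct (rank_least Hok' HC') as [Ha'' [_ Hl'']].
          assert (Lt2 : lexlt V D' (rnk D' (psubst Z U g) s) (rnk D' (PVar U) s)).
          { eapply lexle_lt_trans; [exact (Hl'' r' Ha' Hp')|exact Lt]. }
          rewrite firstn_len by (eapply adm_length; eauto).
          split; [left; auto|intros; auto]. }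
    intros c [Hc|[]]; subst c. exact A3.
  -
    intros p q E.
    destruct p as [|i p]; [simpl in E; discriminate|].
    destruct i as [|i]; [|simpl in E; destruct i; discriminate]. simpl in E.
    destruct p as [|i p]; [discriminate|].
    destruct i as [|i]; [|simpl in E; destruct i; discriminate]. simpl in E.
    destruct p as [|i p3]; [discriminate|].
    destruct i as [|i]; [|simpl in E; destruct i; discriminate]. simpl in E.
    destruct (P3 p3 q E) as [L|[U0 [L1 [L2 L4]]]]; [left; auto|right; exists U0; split; auto; split; auto].
    destruct L4 as [L4|[m [k [q' [cs [E1 [E2 [E3 [E4 [E5 E6]]]]]]]]]].
    + unfold D' in L4; rewrite dom_app in L4; simpl in L4; apply in_app_or in L4.
      destruct L4 as [L4|[L4|[]]]; [left; auto|right]. subst U0.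
      exists [0; 0], (0 :: p3), (mkSeq T D' (PVar U)), [t3].
      split; [reflexivity|]. split; [discriminate|]. split; [reflexivity|]. split; [reflexivity|].
      split; [reflexivity|].
      intros m' k1 k2 q'' cs'' G1 G2 G3 G4 G5 G6. subst m'. destruct k1 as [|j k1]; [congruence|].
      simpl in G3. inversion G3; subst j.
      simpl in G5. apply (U3 k1 q'' cs'' U G5 G6). auto.
    + right. exists (0 :: 0 :: 0 :: m), k, q', cs. subst p3.
      split; [reflexivity|]. split; auto. split; [simpl; auto|]. split; auto. split; auto.
      intros m' k1 k2 q'' cs'' G1 G2 G3 G4 G5 G6. subst m'.
      simpl in G3. inversion G3. simpl in G5.
      apply (E6 (m ++ k1) k1 k2 q'' cs''); auto.
  -
    intros m q cs U0 E HU0.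
    destruct m as [|i m]; simpl in E; [inversion E|].
    destruct i as [|i]; [|destruct i; discriminate]. simpl in E.
    destruct m as [|i m]; [inversion E|].
    destruct i as [|i]; [|destruct i; simpl in E; discriminate]. simpl in E.
    destruct m as [|i m]; [inversion E; subst; simpl in HU0; inversion HU0; subst; exact Fr1|].
    destruct i as [|i]; [|destruct i; simpl in E; discriminate]. simpl in E.
    intro Hin. apply (U3 m q cs U0 E HU0). unfold D'; rewrite dom_app; apply in_or_app; auto.
Qed.

Lemma build_ok n : IHT n.
Proof.
  induction n as [|n IH].
  - intros D A f [Hs _]. pose proof (psize_pos Sigma f). lia.
  - intros D A f HI. destruct f.
    + apply (case_lit n D A (PVar v) HI); [right; auto|exists v; auto].
    + apply (case_lit n D A (PNVar v) HI); [right; auto|exists v; auto].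
    + apply case_and; auto.
    + apply case_or; auto.
    + apply case_box; auto.
    + apply case_dia; auto.
    + change (build (S n) D A (PNu v f)) with (sigtree n D A (PNu v f) v f). apply case_sig; auto.
    + change (build (S n) D A (PMu v f)) with (sigtree n D A (PMu v f) v f). apply case_sig; auto.
Qed.

End F3.

Import ListNotations.
Unset Implicit Arguments.

Scheme extN_mind := Induction for extN Sort Prop
  with extM_mind := Induction for extM Sort Prop
  with extP_mind := Induction for extP Sort Prop.
Combined Scheme ext_mutind from extN_mind, extM_mind, extP_mind.

Section G.
Variables (Sigma St : Type) (trans : St -> Sigma -> St -> Prop) (V : var -> St -> Prop).
Notation psem := (psem trans).
Notation pf := (pform Sigma).
Notation dl := (deflist Sigma).
Notation seq := (sequent Sigma St).
Notation tree := (tree Sigma St).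
Notation adm := (adm trans).
Notation CandV := (CandV Sigma St trans V).
Notation rnk := (rnk Sigma St trans V).
Notation NodeOK := (NodeOK Sigma St trans V).
Notation AllSub := (AllSub Sigma St).
Notation stepcond := (stepcond Sigma St trans).
Notation RankStep := (RankStep Sigma St trans V).

Variable tr : tree.
Hypothesis HA : AllSub NodeOK tr.

Definition Dn n : dl := match seqAt tr n with Some q => sD q | None => [] end.
Definition rho n s : list (St -> Prop) := match seqAt tr n with Some q => rnk (sD q) (sF q) s | None => [] end.

Lemma seqAt_some n t : subtree tr n = Some t -> seqAt tr n = Some (label t).
Proof. intro H; unfold seqAt; rewrite H; auto. Qed.

Lemma SAt_inv n s : SAt tr n s -> exists t, subtree tr n = Some t /\ sS (label t) s.
Proof. unfold SAt, seqAt. destruct (subtree tr n); simpl; [eauto|tauto]. Qed.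

Lemma nodeok_at n t : subtree tr n = Some t -> NodeOK t.
Proof. intro H; apply (HA n t H). Qed.

Lemma cand_at n s : SAt tr n s -> CandV (Dn n) (match fmAt tr n with Some f => f | None => PVar 0 end) s
  /\ defs_ok (Dn n) /\ adm V (Dn n) (rho n s) /\ length (rho n s) = length (Dn n).
Proof.
  intro H. destruct (SAt_inv n s H) as [t [Ht Hs]].
  unfold Dn, rho, fmAt. rewrite (seqAt_some n t Ht). simpl.
  destruct (nodeok_at n t Ht) as [_ [Hsd [Hok _]]].
  destruct (rank_least Hok (Hsd s Hs)) as [Ha _].
  split; auto. split; auto. split; auto. eapply adm_length; eauto.
Qed.

Lemma node_child n i : node tr (n ++ [i]) -> exists q r cs c,
  subtree tr n = Some (Int q r cs) /\ nth_error cs i = Some c /\ subtree tr (n ++ [i]) = Some c.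
Proof.
  unfold node. rewrite subtree_app. destruct (subtree tr n) as [[q|q r cs]|]; simpl; try tauto.
  destruct (nth_error cs i) as [c|] eqn:E; [|tauto]. intros _. exists q, r, cs, c; auto.
Qed.

Definition mucomp n : Prop := exists q cs U Z g, subtree tr n = Some (Int q RUn cs) /\
  sF q = PVar U /\ lookup (sD q) U = Some (PMu Z g).

Lemma step_rank m n s'' s : lt_step trans tr m n s'' s ->
  (exists E, Dn m = Dn n ++ E) /\
  lexle V (Dn n) (firstn (length (Dn n)) (rho m s'')) (rho n s) /\
  (mucomp n -> lexlt V (Dn n) (firstn (length (Dn n)) (rho m s'')) (rho n s)).
Proof.
  intros [[Hnode [i Em]] [H1 [H2 H3]]]. subst m.
  destruct (node_child n i Hnode) as [q [r [cs [c [Hn [Hc Hm]]]]]].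
  destruct (nodeok_at n _ Hn) as [_ [_ [_ Hch]]].
  destruct (Hch c (nth_error_In _ _ Hc)) as [[E HE] RS].
  unfold Dn, rho. rewrite (seqAt_some _ _ Hn), (seqAt_some _ _ Hm). simpl.
  unfold SAt in H1, H2. rewrite (seqAt_some _ _ Hn) in H2. rewrite (seqAt_some _ _ Hm) in H1.
  unfold ruleAt, fmAt in H3. rewrite (seqAt_some _ _ Hn) in H3. rewrite Hn in H3. simpl in H3.
  assert (SC : stepcond r (sF q) s s'').
  { unfold stepcond. destruct r; auto. }
  destruct (RS s'' s H1 H2 SC) as [L1 L2].
  split; [exists E; auto|]. split; auto.
  intros [q' [cs' [U [Z [g [Hn' [HF HL]]]]]]]. rewrite Hn in Hn'. inversion Hn'; subst q' cs' r.
  apply (L2 eq_refl U Z g HF HL).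
Qed.

Lemma lexle_restr (D1 E : dl) r1 r2 : lexle V (D1 ++ E) r1 r2 ->
  lexle V D1 (firstn (length D1) r1) (firstn (length D1) r2).
Proof. apply lexle_firstn. Qed.

Lemma firstn_firstn_le {A : Type} (l : list A) a b : a <= b -> firstn a (firstn b l) = firstn a l.
Proof. intro H. rewrite firstn_firstn. f_equal. lia. Qed.

Lemma trace_rank n' n s' s : trace trans tr n' n s' s ->
  (exists E, Dn n' = Dn n ++ E) /\ lexle V (Dn n) (firstn (length (Dn n)) (rho n' s')) (rho n s).
Proof.
  induction 1 as [n s Hs|n' m n s' s'' s Htr IH Hst].
  - split; [exists []; rewrite app_nil_r; auto|]. right.
    destruct (cand_at n s Hs) as [_ [_ [_ Hl]]]. apply firstn_len; auto.
  - destruct IH as [[E1 HE1] L1]. destruct (step_rank m n s'' s Hst) as [[E2 HE2] [L2 _]].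
    split; [exists (E2 ++ E1); rewrite HE1, HE2, app_assoc; auto|].
    eapply lexle_trans; [|exact L2].
    rewrite HE2 in L1. apply lexle_restr in L1.
    rewrite length_app in L1. rewrite firstn_firstn_le in L1 by lia.
    exact L1.
Qed.

Lemma trace_strict n' n s' s : trace trans tr n' n s' s -> n' <> n -> mucomp n ->
  lexlt V (Dn n) (firstn (length (Dn n)) (rho n' s')) (rho n s).
Proof.
  intros Htr Hne Hmu. inversion Htr as [n0 s0 Hs E1 E2 E3 E4|n'0 m n0 s'0 s'' s0 Htr' Hst E1 E2 E3 E4]; subst.
  - congruence.
  - destruct (trace_rank _ _ _ _ Htr') as [[E1 HE1] L1]. destruct (step_rank m n s'' s Hst) as [[E2 HE2] [_ L2]].
    specialize (L2 Hmu).
    eapply lexle_lt_trans; [|exact L2].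
    rewrite HE2 in L1. apply lexle_restr in L1.
    rewrite length_app in L1. rewrite firstn_firstn_le in L1 by lia.
    exact L1.
Qed.

Lemma comp_info m : companion tr m -> exists q cs U Z g, subtree tr m = Some (Int q RUn cs) /\
  sF q = PVar U /\ (lookup (sD q) U = Some (PNu Z g) \/ lookup (sD q) U = Some (PMu Z g)).
Proof.
  unfold companion, ruleAt. destruct (subtree tr m) as [[q|q r cs]|] eqn:Hm; try discriminate.
  intro E; inversion E; subst r.
  destruct (nodeok_at m _ Hm) as [[_ Hi] _]. simpl in Hi.
  destruct Hi as [U [Z [g [q1 [H1 [_ [H3 _]]]]]]]. exists q, cs, U, Z, g. auto.
Qed.

Lemma cl_of m m' : comp_leaf tr m m' -> cl_cond tr m m'.
Proof. unfold comp_leaf. destruct (length m'); simpl; tauto. Qed.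

Lemma comp_rank m m' s' : companion tr m -> comp_leaf tr m m' -> SAt tr m' s' ->
  (exists E, Dn m' = Dn m ++ E) ->
  lexle V (Dn m) (rho m s') (firstn (length (Dn m)) (rho m' s')) /\ SAt tr m s'.
Proof.
  intros Hc Hcl Hs [E HE].
  destruct (comp_info m Hc) as [q [cs [U [Z [g [Hm [HF HL]]]]]]].
  destruct (cl_of m m' Hcl) as [_ [_ [_ [Hfm Hsub]]]].
  destruct (SAt_inv m' s' Hs) as [t' [Ht' Hs']].
  unfold fmAt in Hfm. rewrite (seqAt_some _ _ Ht'), (seqAt_some _ _ Hm) in Hfm. simpl in Hfm.
  inversion Hfm as [Hf']. rewrite HF in Hf'.
  unfold Dn, rho in *. rewrite (seqAt_some _ _ Ht'), (seqAt_some _ _ Hm) in *. simpl in *.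
  destruct (nodeok_at m' _ Ht') as [[[[Hnd _] _] _] [Hsd [Hok _]]].
  rewrite HE in Hok, Hnd. rewrite Hf', HF.
  assert (Hin : In U (dom (sD q))) by (destruct HL as [HL|HL]; eapply lookup_in; eauto).
  assert (HC := Hsd s' Hs'). rewrite HE, Hf' in HC.
  split; [|apply Hsub; auto].
  rewrite HE. apply (rank_restrict Sigma St trans V (sD q) E U s' Hok Hnd Hin HC).
Qed.

Lemma ext_rank :
 (forall n' n s' s, extN trans tr n' n s' s -> (exists E, Dn n' = Dn n ++ E) /\
     lexle V (Dn n) (firstn (length (Dn n)) (rho n' s')) (rho n s)) /\
 (forall m a b, extM trans tr m a b -> lexle V (Dn m) (rho m a) (rho m b)) /\
 (forall m a b, extP trans tr m a b -> lexle V (Dn m) (rho m a) (rho m b)).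
Proof.
  apply (ext_mutind Sigma St trans tr
    (fun n' n s' s _ => (exists E, Dn n' = Dn n ++ E) /\
     lexle V (Dn n) (firstn (length (Dn n)) (rho n' s')) (rho n s))
    (fun m a b _ => lexle V (Dn m) (rho m a) (rho m b))
    (fun m a b _ => lexle V (Dn m) (rho m a) (rho m b))).
  - intros n' n s' s _ _ Htr. apply trace_rank; auto.
  - intros n' n m s' s t t' _ _ _ _ _ _ _ _ [[E1 HE1] L1] _ LP Htr.
    destruct (trace_rank _ _ _ _ Htr) as [[E2 HE2] L3].
    split; [exists (E2 ++ E1); rewrite HE1, HE2, app_assoc; auto|].
    rewrite HE2 in L1, LP. apply lexle_restr in L1. apply lexle_restr in LP.
    rewrite length_app in L1. rewrite firstn_firstn_le in L1 by lia.
    eapply lexle_trans; [exact L1|]. eapply lexle_trans; [exact LP|]. exact L3.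
  - intros m m' s' s Hc Hcl Hs' _ [HE L].
    destruct (comp_rank m m' s' Hc Hcl Hs' HE) as [L2 _].
    eapply lexle_trans; eauto.
  - intros; auto.
  - intros m a b c _ L1 _ L2. eapply lexle_trans; eauto.
Qed.

Lemma extM_strict m a b : mucomp m -> extM trans tr m a b -> lexlt V (Dn m) (rho m a) (rho m b).
Proof.
  intros Hmu H. inversion H as [m0 m' s' s Hc Hcl Hs' HN]; subst.
  destruct (proj1 ext_rank _ _ _ _ HN) as [HE _].
  destruct (comp_rank m m' a Hc Hcl Hs' HE) as [L0 _].
  eapply lexle_lt_trans; [exact L0|].
  destruct (cl_of m m' Hcl) as [_ [_ [[_ [k [Hk Em]]] _]]].
  assert (Hne : m' <> m) by (intro X; rewrite X in Em; rewrite <- (app_nil_r m) in Em at 1;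
    apply app_inv_head in Em; congruence).
  inversion HN as [n'0 n0 s'0 s0 _ _ Htr E1 E2 E3 E4|n'0 n0 m2 s'0 s0 t t' _ _ _ Hm2 _ _ _ HN2 HP Htr E1 E2 E3 E4]; subst.
  - apply trace_strict; auto.
  - destruct (proj1 ext_rank _ _ _ _ HN2) as [[E1 HE1] L1].
    assert (LP := proj2 (proj2 ext_rank) _ _ _ HP).
    destruct (trace_rank _ _ _ _ Htr) as [[E2 HE2] _].
    assert (L3 := trace_strict _ _ _ _ Htr Hm2 Hmu).
    rewrite HE2 in L1, LP. apply lexle_restr in L1. apply lexle_restr in LP.
    rewrite length_app in L1. rewrite firstn_firstn_le in L1 by lia.
    eapply lexle_lt_trans; [exact L1|]. eapply lexle_lt_trans; [exact LP|]. exact L3.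
Qed.

Lemma extM_wf m : mucomp m -> well_founded (extM trans tr m).
Proof.
  intros Hmu.
  assert (Hok : defs_ok (Dn m)).
  { destruct Hmu as [q [cs [U [Z [g [Hm _]]]]]]. destruct (nodeok_at m _ Hm) as [_ [_ [Hok _]]].
    unfold Dn. rewrite (seqAt_some _ _ Hm). auto. }
  apply (wf_incl _ _ (fun a b => lexR trans V (Dn m) (rho m a) (rho m b))).
  - intros a b H. split; [|apply extM_strict; auto].
    inversion H as [m0 m' s' s Hc Hcl Hs' HN]; subst.
    destruct (proj1 ext_rank _ _ _ _ HN) as [HE _].
    destruct (comp_rank m m' a Hc Hcl Hs' HE) as [_ Hsa].
    apply (cand_at m a Hsa).
  - apply wf_inverse_image. apply lex_wf; auto.
Qed.

End G.

Import ListNotations.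
Unset Implicit Arguments.

Section H.
Variables (Sigma St : Type) (trans : St -> Sigma -> St -> Prop) (V : var -> St -> Prop).
Notation pf := (pform Sigma).
Notation dl := (deflist Sigma).
Notation tree := (tree Sigma St).
Notation NodeOK := (NodeOK Sigma St trans V).
Notation AllSub := (AllSub Sigma St).

Lemma desc_ext_aux k : forall (t1 t2 : tree), AllSub NodeOK t1 -> subtree t1 k = Some t2 ->
  exists E, sD (label t2) = sD (label t1) ++ E.
Proof.
  induction k as [|i k IH]; intros t1 t2 HA H.
  - simpl in H; inversion H; subst. exists []; rewrite app_nil_r; auto.
  - destruct t1 as [q|q r cs]; simpl in H; [discriminate|].
    destruct (nth_error cs i) as [c|] eqn:Ec; [|discriminate].
    destruct (HA [] _ eq_refl) as [_ [_ [_ Hch]]].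
    destruct (Hch c (nth_error_In _ _ Ec)) as [[E1 HE1] _].
    assert (HAc : AllSub NodeOK c) by (apply (AllSub_sub Sigma St _ _ [i] c HA); simpl; rewrite Ec; auto).
    destruct (IH c t2 HAc H) as [E2 HE2]. exists (E1 ++ E2). rewrite HE2, HE1. simpl. rewrite app_assoc; auto.
Qed.

Variable tr : tree.
Hypothesis HA : AllSub NodeOK tr.
Hypothesis HP : LeafProp Sigma St trans V [] tr.

Lemma leaf_facts n q : subtree tr n = Some (Leaf q) -> terminal trans tr n /\ successful_leaf trans V tr n.
Proof.
  intro Hn.
  assert (Hsq : seqAt tr n = Some q) by (apply (seqAt_some Sigma St tr n _ Hn)).
  assert (Hleaf : is_leaf tr n) by (exists q; auto).
  destruct (HA n _ Hn) as [[Hvs _] [Hsd [Hok _]]]. simpl in Hvs, Hsd, Hok.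
  destruct (HP n q Hn) as [[Z [HZ HnZ]]|[U [HF [Hin [Hin0|[m [k [q' [cs [Ek [Hk [Hm [HF' [HS' Hbw]]]]]]]]]]]]]].
  - split.
    + exists q. split; auto. left. exists Z; auto.
    + exists q. split; auto. destruct HZ as [HZ|HZ]; [left|right; left]; exists Z; repeat split; auto.
      * intros s Hs. destruct (Hsd s Hs) as [r [_ Hp]]. rewrite HZ in Hp. rewrite psem_var in Hp.
        rewrite valof_notin in Hp; auto.
      * intros s Hs. destruct (Hsd s Hs) as [r [_ Hp]]. rewrite HZ in Hp. rewrite psem_nvar in Hp.
        rewrite valof_notin in Hp; auto.
  - simpl in Hin0; contradiction.
  -
    destruct (HA m _ Hm) as [[_ Hinst] _]. simpl in Hinst.
    destruct Hinst as [U1 [Z [g [q1 [HF1 [_ [HL _]]]]]]]. rewrite HF' in HF1. inversion HF1; subst U1.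
    assert (HinU : In U (dom (sD q'))) by (destruct HL as [HL|HL]; eapply lookup_in; eauto).
    assert (Hk2 : subtree (Int q' RUn cs) k = Some (Leaf q)) by (rewrite Ek, subtree_app, Hm in Hn; exact Hn).
    destruct (desc_ext_aux k _ _ (AllSub_sub Sigma St _ _ m _ HA Hm) Hk2) as [E HE]. simpl in HE.
    assert (Hsub : forall s, sS q s -> sS q' s).
    { intros s Hs. rewrite HS'.
      assert (HC := Hsd s Hs). rewrite HF, HE in HC.
      destruct Hvs as [[Hnd _] _]. rewrite HE in Hnd. rewrite HE in Hok.
      apply (rank_restrict Sigma St trans V (sD q') E U s Hok Hnd HinU HC). }
    assert (Hsm : seqAt tr m = Some q') by (apply (seqAt_some Sigma St tr m _ Hm)).
    assert (Hanc : strict_anc tr m n).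
    { split; [unfold node; rewrite Hn; discriminate|]. exists k; auto. }
    assert (Hsubset : subset (SAt tr n) (SAt tr m)).
    { intros s Hs. unfold SAt in *. rewrite Hsq in Hs. rewrite Hsm. apply Hsub; auto. }
    assert (SL : sigma_leaf tr n).
    { exists q, U. split; auto. split; auto. split; auto. split; auto. exists m. split; auto. split; auto.
      unfold fmAt. rewrite Hsm. simpl. rewrite HF'. auto. }
    assert (HLq : lookup (sD q) U = lookup (sD q') U) by (rewrite HE; apply (lookup_app Sigma St V); auto).
    split; [exists q; split; auto; right; right; exact SL|].
    exists q. split; auto. destruct HL as [HL|HL].
    + right; right; left. split; auto. exists q, U, Z, g. repeat split; auto. rewrite HLq; auto.
    + right; right; right. split; [split; auto; exists q, U, Z, g; repeat split; auto; rewrite HLq; auto|].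
      exists m. split.
      * unfold comp_leaf.
        assert (Hlen : length n <> 0) by (rewrite Ek, length_app; destruct k; [congruence|simpl; lia]).
        destruct (length n) as [|k'] eqn:Hl; [congruence|]. simpl. split.
        -- split; [unfold companion, ruleAt; rewrite Hm; auto|]. split; auto. split; auto. split; auto.
           unfold fmAt. rewrite Hsq, Hsm. simpl. rewrite HF, HF'. auto.
        -- intros [m' [Hc' [[_ [k1 [Hk1 Em']]] Hcf]]]. destruct k' as [|k'']; [simpl in Hcf; auto|].
           simpl in Hcf. destruct Hcf as [[_ [_ [[_ [k2 [Hk2' En']]] [Hfm _]]]] _].
           destruct (comp_info Sigma St trans V tr HA m' Hc') as [q'' [cs'' [U'' [Z'' [g'' [Hm'' [HF'' _]]]]]]].
           unfold fmAt in Hfm. rewrite Hsq, (seqAt_some Sigma St tr m' _ Hm'') in Hfm. simpl in Hfm.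
           inversion Hfm as [Hfm']. rewrite HF in Hfm'.
           apply (Hbw m' k1 k2 q'' cs'' Em' Hk1 En' Hk2' Hm''). rewrite <- Hfm'. auto.
      * apply (extM_wf Sigma St trans V tr HA m). exists q', cs, U, Z, g. auto.
Qed.

End H.

Theorem theorem4 (Sigma St : Type) (trans : St -> Sigma -> St -> Prop)
  (V : var -> St -> Prop) (S : St -> Prop) (Phi : pform Sigma) :
  well_formed (toform Phi) ->
  (forall s, S s -> sem trans V (toform Phi) s) ->
  exists tr : tree Sigma St,
    successful_tableau trans V tr /\ label tr = mkSeq S [] Phi.
Proof.
  intros Hwf Hsem.
  assert (HI : Inv Sigma St trans V (psize Phi) [] S Phi).
  { split; [auto|]. split; [split; simpl; tauto|]. split; [|split; [apply wf_pwf; auto|]].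
    - split; [|simpl; tauto]. split; [constructor|]. split; [simpl; tauto|].
      intros i j Ui fi Uj fj _ Ei. destruct i; simpl in Ei; discriminate.
    - intros s Hs. exists []. split; [simpl; auto|]. simpl. apply Hsem; auto. }
  destruct (build_ok Sigma St trans V (psize Phi) [] S Phi HI) as [HA [HL [HP HU]]].
  exists (build Sigma St trans V (psize Phi) [] S Phi). split; [|exact HL].
  split.
  - split; [|split].
    + intros p t Ht. apply (HA p t Ht).
    + rewrite HL. auto.
    + intros n [q Hq]. apply (leaf_facts Sigma St trans V _ HA HP n q Hq).
  - intros n [q Hq]. apply (leaf_facts Sigma St trans V _ HA HP n q Hq).
Qed.
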